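(* In the ladder model, the density $\rho_\infty$ of the stationary distribution of $(\Delta_n)_{n\ge0}$ satisfies (i) the integral equations $$\rho_\infty(d)=e^{d}\int_{-\infty}^{d}\rho_\infty(\delta)\,d\delta+e^{2d}\int_{d}^{\infty}\rho_\infty(\delta)e^{-\delta}\,d\delta\quad (d<0),$$ $$\rho_\infty(d)=e^{-2d}\int_{-\infty}^{d}\rho_\infty(\delta)e^{\delta}\,d\delta+e^{-d}\int_{d}^{\infty}\rho_\infty(\delta)\,d\delta\quad (d\ge0);$$ (ii) $\rho_\infty$ is even: $\rho_\infty(d)=\rho_\infty(-d)$ for all $d\in\mathbb{R}$.
   Context: Ladder model $\mathcal{G}^{\{\mathcal{X},\mathcal{Y},\mathcal{Z}\}}$: for $n\ge0$, $G_n$ has vertex set $\{0,\dots,n\}\times\{0,1\}$ and edges: for $1\le i\le n$, an edge with weight $X_i$ joining $(i-1,0)$ and $(i,0)$, an edge with weight $Y_i$ joining $(i-1,1)$ and $(i,1)$; for $0\le i\le n$, an edge with weight $Z_i$ joining $(i,0)$ and $(i,1)$. All weights are independent standard exponential random variables. Path weight = sum of edge weights. $l_n$ ($l_n'$) is the minimal weight of a path in $G_n$ from $(0,0)$ to $(n,0)$ (to $(n,1)$), and $\Delta_n=l_n'-l_n$; $(\Delta_n)$ is an ergodic Markov chain given by $\Delta_0$ standard exponential and $\Delta_n=\min\{\Delta_{n-1}+Y_n,X_n+Z_n\}-\min\{X_n,\Delta_{n-1}+Y_n+Z_n\}$, and $\rho_\infty$ is the density of its unique stationary distribution. *)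

(* Defs.v *)
From Stdlib Require Import Reals.
Open Scope R_scope.

Definition Dstep (d x y z : R) : R :=
  Rmin (d + y) (x + z) - Rmin x (d + y + z).

Definition is_RInt (f : R -> R) (a b l : R) : Prop :=
  exists pr : Riemann_integrable f a b, RiemannInt pr = l.

Definition is_int_from (f : R -> R) (a l : R) : Prop :=
  forall eps, 0 < eps -> exists M, forall b, M <= b ->
    exists v, is_RInt f a b v /\ Rabs (v - l) < eps.

Definition is_int_to (f : R -> R) (b l : R) : Prop :=
  forall eps, 0 < eps -> exists M, forall a, a <= M ->
    exists v, is_RInt f a b v /\ Rabs (v - l) < eps.

Definition is_int_R (f : R -> R) (l : R) : Prop :=
  forall eps, 0 < eps -> exists M, forall a b, a <= - M -> M <= b ->
    exists v, is_RInt f a b v /\ Rabs (v - l) < eps.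

(** E[phi(X,Y,Z)] = v for X,Y,Z i.i.d. standard exponential,
    written as an iterated improper integral with density e^{-x} e^{-y} e^{-z}. *)
Definition exp_expect3 (phi : R -> R -> R -> R) (v : R) : Prop :=
  exists (h2 : R -> R -> R) (h1 : R -> R),
    (forall x y, is_int_from (fun z => phi x y z * exp (- z)) 0 (h2 x y)) /\
    (forall x, is_int_from (fun y => h2 x y * exp (- y)) 0 (h1 x)) /\
    is_int_from (fun x => h1 x * exp (- x)) 0 v.

Definition prob_density (rho : R -> R) : Prop :=
  (forall d, 0 <= rho d) /\ is_int_R rho 1.

(** rho is the density of a stationary distribution of the chain:
    if Delta_0 has density rho and X,Y,Z are independent standard exponentials
    independent of Delta_0, then Dstep Delta_0 X Y Z has the same law, tested
    against all continuous compactly supported g: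
      int rho(delta) E[g(Dstep delta X Y Z)] d delta = int rho(delta) g(delta) d delta. *)
Definition stationary_density (rho : R -> R) : Prop :=
  forall g : R -> R, continuity g ->
    (exists K, forall t, K < Rabs t -> g t = 0) ->
    exists Eg : R -> R,
      (forall delta, exp_expect3 (fun x y z => g (Dstep delta x y z)) (Eg delta)) /\
      exists L, is_int_R (fun delta => rho delta * Eg delta) L /\
                is_int_R (fun delta => rho delta * g delta) L.

(* Main.v *)
Require Import Defs.
From Stdlib Require Import Reals.
Open Scope R_scope.
From Stdlib Require Import Lra.
From Coquelicot Require Import Coquelicot.

Lemma isR_iff f a b l : Defs.is_RInt f a b l <-> is_RInt f a b l.
Proof.
  split.
  - intros [pr Hpr]. assert (He := ex_RInt_Reals_1 f a b pr).
    rewrite <- Hpr, <- (RInt_Reals f a b pr). exact (RInt_correct f a b He).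
  - intros H. assert (He : ex_RInt f a b) by (eexists; eauto).
    exists (ex_RInt_Reals_0 f a b He). rewrite <- RInt_Reals.
    now apply is_RInt_unique.
Qed.

Definition lim_pinf (F : R -> R) (l : R) := forall eps, 0 < eps -> exists M, forall b, M <= b -> Rabs (F b - l) < eps.
Definition lim_minf (F : R -> R) (l : R) := forall eps, 0 < eps -> exists M, forall a, a <= M -> Rabs (F a - l) < eps.

Lemma from_of_lim f a F l : (forall b, a <= b -> is_RInt f a b (F b)) -> lim_pinf F l -> is_int_from f a l.
Proof.
  intros HF HL eps Heps. destruct (HL eps Heps) as [M HM]. exists (Rmax M a). intros b Hb.
  exists (F b). split. apply isR_iff, HF. eapply Rle_trans; [apply Rmax_r|exact Hb].
  apply HM. eapply Rle_trans; [apply Rmax_l|exact Hb].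
Qed.

Lemma to_of_lim f b F l : (forall a, a <= b -> is_RInt f a b (F a)) -> lim_minf F l -> is_int_to f b l.
Proof.
  intros HF HL eps Heps. destruct (HL eps Heps) as [M HM]. exists (Rmin M b). intros a Ha.
  exists (F a). split. apply isR_iff, HF. eapply Rle_trans; [exact Ha|apply Rmin_r].
  apply HM. eapply Rle_trans; [exact Ha|apply Rmin_l].
Qed.

Lemma lim_of_from f a l : is_int_from f a l -> lim_pinf (fun b => RInt f a b) l.
Proof.
  intros H eps Heps. destruct (H eps Heps) as [M HM]. exists M. intros b Hb.
  destruct (HM b Hb) as [v [Hv1 Hv2]]. apply isR_iff in Hv1. now rewrite (is_RInt_unique _ _ _ _ Hv1).
Qed.

Lemma lim_of_to f b l : is_int_to f b l -> lim_minf (fun a => RInt f a b) l.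
Proof.
  intros H eps Heps. destruct (H eps Heps) as [M HM]. exists M. intros a Ha.
  destruct (HM a Ha) as [v [Hv1 Hv2]]. apply isR_iff in Hv1. now rewrite (is_RInt_unique _ _ _ _ Hv1).
Qed.

Lemma small_eq x y : (forall eps, 0 < eps -> Rabs (x - y) < eps) -> x = y.
Proof.
  intros H. destruct (Req_dec x y) as [e|n]; auto.
  assert (0 < Rabs (x - y)) by (apply Rabs_pos_lt; lra).
  specialize (H _ H0). lra.
Qed.

Lemma lim_pinf_unique F l1 l2 : lim_pinf F l1 -> lim_pinf F l2 -> l1 = l2.
Proof.
  intros H1 H2. apply small_eq. intros eps He.
  destruct (H1 (eps/2)) as [M1 HM1]. lra. destruct (H2 (eps/2)) as [M2 HM2]. lra.
  specialize (HM1 (Rmax M1 M2) (Rmax_l _ _)). specialize (HM2 (Rmax M1 M2) (Rmax_r _ _)).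
  apply Rabs_def2 in HM1. apply Rabs_def2 in HM2. apply Rabs_def1; lra.
Qed.

Lemma lim_minf_unique F l1 l2 : lim_minf F l1 -> lim_minf F l2 -> l1 = l2.
Proof.
  intros H1 H2. apply small_eq. intros eps He.
  destruct (H1 (eps/2)) as [M1 HM1]. lra. destruct (H2 (eps/2)) as [M2 HM2]. lra.
  specialize (HM1 (Rmin M1 M2) (Rmin_l _ _)). specialize (HM2 (Rmin M1 M2) (Rmin_r _ _)).
  apply Rabs_def2 in HM1. apply Rabs_def2 in HM2. apply Rabs_def1; lra.
Qed.

Lemma from_unique f a l1 l2 : is_int_from f a l1 -> is_int_from f a l2 -> l1 = l2.
Proof. intros H1 H2. eapply lim_pinf_unique; apply lim_of_from; eauto. Qed.

Lemma lim_pinf_ext F G l : (exists M, forall b, M <= b -> F b = G b) -> lim_pinf F l -> lim_pinf G l.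
Proof.
  intros [M0 HM0] H eps He. destruct (H eps He) as [M HM]. exists (Rmax M M0). intros b Hb.
  rewrite <- HM0. apply HM. all: eapply Rle_trans; [|exact Hb]; auto using Rmax_l, Rmax_r.
Qed.

Lemma lim_minf_ext F G l : (exists M, forall b, b <= M -> F b = G b) -> lim_minf F l -> lim_minf G l.
Proof.
  intros [M0 HM0] H eps He. destruct (H eps He) as [M HM]. exists (Rmin M M0). intros b Hb.
  rewrite <- HM0. apply HM. all: eapply Rle_trans; [exact Hb|]; auto using Rmin_l, Rmin_r.
Qed.

Lemma lim_pinf_const c : lim_pinf (fun _ => c) c.
Proof. intros eps He. exists 0. intros. rewrite Rminus_eq_0, Rabs_R0. lra. Qed.

Lemma lim_pinf_plus F G l1 l2 : lim_pinf F l1 -> lim_pinf G l2 -> lim_pinf (fun x => F x + G x) (l1 + l2).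
Proof.
  intros H1 H2 eps He. destruct (H1 (eps/2)) as [M1 HM1]. lra. destruct (H2 (eps/2)) as [M2 HM2]. lra.
  exists (Rmax M1 M2). intros b Hb.
  assert (A1 := HM1 b (Rle_trans _ _ _ (Rmax_l _ _) Hb)). assert (A2 := HM2 b (Rle_trans _ _ _ (Rmax_r _ _) Hb)).
  apply Rabs_def2 in A1. apply Rabs_def2 in A2. apply Rabs_def1; lra.
Qed.

Lemma lim_pinf_scal c F l : lim_pinf F l -> lim_pinf (fun x => c * F x) (c * l).
Proof.
  intros H eps He. destruct (H (eps / (Rabs c + 1))) as [M HM].
  apply Rdiv_lt_0_compat; auto. pose proof (Rabs_pos c); lra.
  exists M. intros b Hb. specialize (HM b Hb).
  replace (c * F b - c * l) with (c * (F b - l)) by ring. rewrite Rabs_mult.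
  pose proof (Rabs_pos c). pose proof (Rabs_pos (F b - l)).
  apply Rle_lt_trans with (Rabs c * (eps / (Rabs c + 1))).
  apply Rmult_le_compat_l; lra.
  apply Rlt_le_trans with ((Rabs c + 1) * (eps / (Rabs c + 1))).
  apply Rmult_lt_compat_r. apply Rdiv_lt_0_compat; lra. lra.
  right. field. lra.
Qed.

Lemma lim_minf_pinf F l : lim_pinf (fun x => F (- x)) l -> lim_minf F l.
Proof.
  intros H eps He. destruct (H eps He) as [M HM]. exists (- M). intros a Ha.
  replace a with (- - a) by ring. apply HM. lra.
Qed.

Lemma lim_pinf_minf F l : lim_minf (fun x => F (- x)) l -> lim_pinf F l.
Proof.
  intros H eps He. destruct (H eps He) as [M HM]. exists (- M). intros a Ha.
  replace a with (- - a) by ring. apply HM. lra.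
Qed.

Lemma lim_exp_neg : lim_pinf (fun x => exp (- x)) 0.
Proof.
  intros eps He. exists (1 - ln eps). intros b Hb.
  rewrite Rminus_0_r, Rabs_pos_eq by (left; apply exp_pos).
  rewrite <- (exp_ln eps He). apply exp_increasing. lra.
Qed.

Lemma lim_pinf_bounded_mult F G : (exists C, forall x, Rabs (F x) <= C) -> lim_pinf G 0 -> lim_pinf (fun x => F x * G x) 0.
Proof.
  intros [C HC] H eps He. destruct (H (eps / (Rabs C + 1))) as [M HM].
  apply Rdiv_lt_0_compat; auto. pose proof (Rabs_pos C); lra.
  exists M. intros b Hb. specialize (HM b Hb). rewrite Rminus_0_r in *. rewrite Rabs_mult.
  pose proof (HC b). pose proof (Rabs_pos (F b)). pose proof (Rabs_pos (G b)).
  assert (C <= Rabs C + 1) by (pose proof (Rle_abs C); lra).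
  apply Rle_lt_trans with ((Rabs C + 1) * Rabs (G b)). apply Rmult_le_compat_r; lra.
  apply Rlt_le_trans with ((Rabs C + 1) * (eps / (Rabs C + 1))).
  pose proof (Rabs_pos C). apply Rmult_lt_compat_l; lra. right. field. pose proof (Rabs_pos C); lra.
Qed.

Lemma mono_lim F a Bd : (forall x y, a <= x -> x <= y -> F x <= F y) -> (forall x, a <= x -> F x <= Bd) ->
  exists l, lim_pinf F l /\ (forall x, a <= x -> F x <= l).
Proof.
  intros Hm Hb.
  set (E := fun y => exists b, a <= b /\ y = F b).
  assert (Hbd : bound E) by (exists Bd; intros y [b [Hab ->]]; auto).
  assert (Hne : exists y, E y) by (exists (F a); exists a; split; [lra|auto]).
  destruct (completeness E Hbd Hne) as [l [Hub Hlub]].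
  exists l. split.
  - intros eps He.
    destruct (Classical_Prop.classic (exists b, a <= b /\ l - eps < F b)) as [[b0 [Hb0 Hlt]]|Hn].
    + exists b0. intros b Hbb. assert (F b0 <= F b) by (apply Hm; lra).
      assert (F b <= l) by (apply Hub; exists b; split; [lra|auto]).
      rewrite Rabs_left1 by lra. lra.
    + exfalso. assert (l <= l - eps). apply Hlub. intros y [b [Hab ->]].
      destruct (Rle_dec (F b) (l - eps)); auto. exfalso; apply Hn; exists b; split; auto; lra. lra.
  - intros x Hx. apply Hub. exists x; auto.
Qed.

Lemma from_of_lim' f a M0 F l : (forall b, M0 <= b -> is_RInt f a b (F b)) -> lim_pinf F l -> is_int_from f a l.
Proof.
  intros HF HL eps Heps. destruct (HL eps Heps) as [M HM]. exists (Rmax M M0). intros b Hb.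
  exists (F b). split. apply isR_iff, HF. eapply Rle_trans; [apply Rmax_r|exact Hb].
  apply HM. eapply Rle_trans; [apply Rmax_l|exact Hb].
Qed.

Implicit Types (f g F G : R -> R) (a b c d x y l s t z u v dl : R).

Definition Cont (f : R -> R) := forall x, continuous f x.

Lemma Cont_of f : continuity f -> Cont f.
Proof. intros H x. apply continuity_pt_filterlim, H. Qed.

Lemma Cont_cst c : Cont (fun _ => c).
Proof. intros x. apply continuous_const. Qed.
Lemma Cont_id : Cont (fun x => x).
Proof. intros x. apply continuous_id. Qed.
Lemma Cont_mul f g : Cont f -> Cont g -> Cont (fun x => f x * g x).
Proof. intros Hf Hg x. apply (continuous_mult f g x); auto. Qed.
Lemma Cont_plus f g : Cont f -> Cont g -> Cont (fun x => f x + g x).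
Proof. intros Hf Hg x. apply (continuous_plus f g x); auto. Qed.
Lemma Cont_opp f : Cont f -> Cont (fun x => - f x).
Proof. intros Hf x. apply (continuous_opp f x); auto. Qed.
Lemma Cont_minus f g : Cont f -> Cont g -> Cont (fun x => f x - g x).
Proof. intros Hf Hg. apply Cont_plus; auto. apply Cont_opp; auto. Qed.
Lemma Cont_comp f g : Cont f -> Cont g -> Cont (fun x => f (g x)).
Proof. intros Hf Hg x. apply (continuous_comp g f x); auto. Qed.
Lemma Cont_exp : Cont exp.
Proof. intros x. apply continuous_exp. Qed.
Lemma Cont_expl c d : Cont (fun x => exp (c * x + d)).
Proof. apply (Cont_comp exp (fun x => c * x + d)). apply Cont_exp.
  apply Cont_plus. apply Cont_mul. apply Cont_cst. apply Cont_id. apply Cont_cst. Qed.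
Lemma Cont_max0 f : Cont f -> Cont (fun x => Rmax 0 (f x)).
Proof. intros Hf x. apply continuity_pt_filterlim.
  assert (E : (fun x => Rmax 0 (f x)) = (fun x => (f x + Rabs (f x)) / 2)).
  { apply FunctionalExtensionality.functional_extensionality. intros y.
    unfold Rmax. destruct (Rle_dec 0 (f y)). rewrite Rabs_pos_eq; lra. rewrite Rabs_left; lra. }
  rewrite E. apply continuity_pt_filterlim.
  apply (continuous_mult (fun x => f x + Rabs (f x)) (fun _ => /2) x).
  apply (continuous_plus f (fun x => Rabs (f x))); auto. apply continuous_Rabs_comp; auto.
  apply continuous_const. Qed.

Lemma exR f a b : Cont f -> ex_RInt f a b.
Proof. intros H. apply (ex_RInt_continuous (V:=R_CompleteNormedModule)). intros; apply H. Qed.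

Lemma isR f a b : Cont f -> is_RInt f a b (RInt f a b).
Proof. intros H. apply (RInt_correct f a b). apply exR; auto. Qed.

Lemma d_mul f g x df dg : is_derive f x df -> is_derive g x dg -> is_derive (fun t => f t * g t) x (df * g x + f x * dg).
Proof. intros H1 H2. apply (is_derive_mult f g x df dg H1 H2). intros; apply Rmult_comm. Qed.
Lemma d_plus f g x df dg : is_derive f x df -> is_derive g x dg -> is_derive (fun t => f t + g t) x (df + dg).
Proof. intros H1 H2. apply (is_derive_plus f g x df dg H1 H2). Qed.
Lemma d_opp f x df : is_derive f x df -> is_derive (fun t => - f t) x (- df).
Proof. intros H1. apply (is_derive_opp f x df H1). Qed.
Lemma d_minus f g x df dg : is_derive f x df -> is_derive g x dg -> is_derive (fun t => f t - g t) x (df - dg).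
Proof. intros H1 H2. apply (is_derive_minus f g x df dg H1 H2). Qed.
Lemma d_comp f g x df dg : is_derive f (g x) df -> is_derive g x dg -> is_derive (fun t => f (g t)) x (dg * df).
Proof. intros H1 H2. apply (is_derive_comp f g x df dg H1 H2). Qed.
Lemma d_cst (c x : R) : is_derive (fun _ : R => c) x 0.
Proof. apply (is_derive_const c x). Qed.
Lemma d_expl (c d x : R) : is_derive (fun t => exp (c * t + d)) x (c * exp (c * x + d)).
Proof. auto_derive. auto. ring. Qed.
Lemma d_ext (f g : R -> R) (x l : R) : (forall t, f t = g t) -> is_derive f x l -> is_derive g x l.
Proof. intros H. apply is_derive_ext. auto. Qed.
Lemma d_prim f a x : Cont f -> is_derive (fun t => RInt f a t) x (f x).
Proof. intros H. apply (is_derive_RInt f _ a x). apply filter_forall. intros; apply isR; auto. apply H. Qed.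
Lemma d_primL f b x : Cont f -> is_derive (fun t => RInt f t b) x (- f x).
Proof. intros H. apply (is_derive_RInt' f _ x b). apply filter_forall. intros; apply isR; auto. apply H. Qed.
Lemma d_unique (f : R -> R) (x l1 l2 : R) : is_derive f x l1 -> is_derive f x l2 -> l1 = l2.
Proof. intros H1 H2. apply is_derive_unique in H1. apply is_derive_unique in H2. congruence. Qed.

Lemma ftc F f a b : (forall x, is_derive F x (f x)) -> Cont f -> is_RInt f a b (F b - F a).
Proof. intros H1 H2. apply (is_RInt_derive (V:=R_CompleteNormedModule) F f a b); intros; auto. Qed.

Lemma ftc_loc F f a b : a <= b -> (forall x, a <= x <= b -> is_derive F x (f x)) -> (forall x, a <= x <= b -> continuous f x) -> is_RInt f a b (F b - F a).
Proof. intros Hab H1 H2. apply (is_RInt_derive (V:=R_CompleteNormedModule) F f a b); intros.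
  apply H1. rewrite Rmin_left, Rmax_right in H; lra. apply H2. rewrite Rmin_left, Rmax_right in H; lra. Qed.

Lemma RIv f a b l : is_RInt f a b l -> RInt f a b = l.
Proof. intros H. exact (is_RInt_unique f a b l H). Qed.

Lemma isR_chasles f a b c l1 l2 : is_RInt f a b l1 -> is_RInt f b c l2 -> is_RInt f a c (l1 + l2).
Proof. intros. exact (is_RInt_Chasles f a b c l1 l2 H H0). Qed.

Lemma RInt_chasles f a b c : Cont f -> RInt f a b + RInt f b c = RInt f a c.
Proof. intros H. symmetry. apply RIv. apply (isR_chasles f a b c); apply isR; auto. Qed.

Lemma isR_ext f g a b l : (forall x, Rmin a b < x < Rmax a b -> f x = g x) -> is_RInt f a b l -> is_RInt g a b l.
Proof. intros. exact (is_RInt_ext f g a b l H H0). Qed.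

Lemma isR_zero f a b : (forall x, Rmin a b < x < Rmax a b -> f x = 0) -> is_RInt f a b 0.
Proof. intros H. apply (isR_ext (fun _ => 0)). intros x Hx. symmetry. apply H. exact Hx.
  assert (H0 := ftc (fun _ => 0) (fun _ => 0) a b (fun x => d_cst 0 x) (Cont_cst 0)). rewrite Rminus_0_r in H0. exact H0. Qed.

Lemma isR_plus f g a b l1 l2 : is_RInt f a b l1 -> is_RInt g a b l2 -> is_RInt (fun x => f x + g x) a b (l1 + l2).
Proof. intros. exact (is_RInt_plus f g a b l1 l2 H H0). Qed.
Lemma isR_minus f g a b l1 l2 : is_RInt f a b l1 -> is_RInt g a b l2 -> is_RInt (fun x => f x - g x) a b (l1 - l2).
Proof. intros. exact (is_RInt_minus f g a b l1 l2 H H0). Qed.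
Lemma isR_scal c f a b l : is_RInt f a b l -> is_RInt (fun x => c * f x) a b (c * l).
Proof. intros. exact (is_RInt_scal f a b c l H). Qed.
Lemma isR_unique f a b l1 l2 : is_RInt f a b l1 -> is_RInt f a b l2 -> l1 = l2.
Proof. intros H1 H2. rewrite <- (RIv _ _ _ _ H1). apply RIv; auto. Qed.

Lemma isR_le f g a b l1 l2 : a <= b -> is_RInt f a b l1 -> is_RInt g a b l2 -> (forall x, a < x < b -> f x <= g x) -> l1 <= l2.
Proof. intros. exact (is_RInt_le f g a b l1 l2 H H0 H1 H2). Qed.

Lemma RInt_ge0 f a b : Cont f -> a <= b -> (forall x, 0 <= f x) -> 0 <= RInt f a b.
Proof. intros Hc Hab H. apply RInt_ge_0; auto. apply exR; auto. Qed.

Lemma RInt_mono f g a b : Cont f -> Cont g -> a <= b -> (forall x, a <= x <= b -> f x <= g x) -> RInt f a b <= RInt g a b.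
Proof. intros Hf Hg Hab H. apply RInt_le; auto; try apply exR; auto. intros; apply H; lra. Qed.

Lemma RInt_sub_int f a b a' b' : Cont f -> (forall x, 0 <= f x) -> a' <= a -> a <= b -> b <= b' -> RInt f a b <= RInt f a' b'.
Proof. intros Hc H0 H1 H2 H3.
  rewrite <- (RInt_chasles f a' a b') by auto. rewrite <- (RInt_chasles f a b b') by auto.
  pose proof (RInt_ge0 f a' a Hc H1 H0). pose proof (RInt_ge0 f b b' Hc H3 H0). lra. Qed.

Lemma RInt_pos_lt f a b : Cont f -> a < b -> (forall x, a < x < b -> 0 < f x) -> 0 < RInt f a b.
Proof. intros Hc Hab H.
  assert (E : RInt (fun _ => 0) a b = 0) by (apply RIv, isR_zero; auto).
  rewrite <- E. apply RInt_lt; auto. intros; apply continuous_const. Qed.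

Lemma exp_le_mono x y : x <= y -> exp x <= exp y.
Proof. intros H. destruct H as [H|H]. left; apply exp_increasing; auto. rewrite H; lra. Qed.

Lemma d_val (f : R -> R) (x l1 l2 : R) : is_derive f x l1 -> l1 = l2 -> is_derive f x l2.
Proof. intros H ->; auto. Qed.
Lemma Cont_der f f' : (forall x, is_derive f x (f' x)) -> Cont f.
Proof. intros H x. apply (ex_derive_continuous (K:=R_AbsRing) (V:=R_NormedModule)). eexists; apply H. Qed.
Lemma Cont_prim f a : Cont f -> Cont (fun t => RInt f a t).
Proof. intros H. apply (Cont_der _ f). intros; apply d_prim; auto. Qed.
Lemma Cont_primL f b : Cont f -> Cont (fun t => RInt f t b).
Proof. intros H. apply (Cont_der _ (fun t => - f t)). intros; apply d_primL; auto. Qed.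
Lemma d_lin (c d x : R) : is_derive (fun t => c * t + d) x c.
Proof. auto_derive; auto; ring. Qed.
Lemma Cont_lin c d : Cont (fun t => c * t + d).
Proof. apply (Cont_der _ (fun _ => c)). intros; apply d_lin. Qed.
Lemma Cont_compl f c d : Cont f -> Cont (fun t => f (c * t + d)).
Proof. intros H. apply (Cont_comp f (fun t => c * t + d)); auto. apply Cont_lin. Qed.
Lemma Cont_ext f g : (forall x, f x = g x) -> Cont f -> Cont g.
Proof. intros H Hf. replace g with f; auto. apply FunctionalExtensionality.functional_extensionality; auto. Qed.

Lemma lim_pinf_le F l a Bd : lim_pinf F l -> (forall x, a <= x -> F x <= Bd) -> l <= Bd.
Proof. intros H Hb. destruct (Rle_dec l Bd) as [h|h]; auto. exfalso.
  destruct (H (l - Bd)) as [M HM]. lra. specialize (HM (Rmax M a) (Rmax_l _ _)).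
  specialize (Hb (Rmax M a) (Rmax_r _ _)). apply Rabs_def2 in HM. lra. Qed.

Lemma lim_pinf_ge F l a Bd : lim_pinf F l -> (forall x, a <= x -> Bd <= F x) -> Bd <= l.
Proof. intros H Hb. destruct (Rle_dec Bd l) as [h|h]; auto. exfalso.
  destruct (H (Bd - l)) as [M HM]. lra. specialize (HM (Rmax M a) (Rmax_l _ _)).
  specialize (Hb (Rmax M a) (Rmax_r _ _)). apply Rabs_def2 in HM. lra. Qed.

Lemma lim_minf_le F l a Bd : lim_minf F l -> (forall x, x <= a -> F x <= Bd) -> l <= Bd.
Proof. intros H Hb. destruct (Rle_dec l Bd) as [h|h]; auto. exfalso.
  destruct (H (l - Bd)) as [M HM]. lra. specialize (HM (Rmin M a) (Rmin_l _ _)).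
  specialize (Hb (Rmin M a) (Rmin_r _ _)). apply Rabs_def2 in HM. lra. Qed.

Lemma lim_minf_ge F l a Bd : lim_minf F l -> (forall x, x <= a -> Bd <= F x) -> Bd <= l.
Proof. intros H Hb. destruct (Rle_dec Bd l) as [h|h]; auto. exfalso.
  destruct (H (Bd - l)) as [M HM]. lra. specialize (HM (Rmin M a) (Rmin_l _ _)).
  specialize (Hb (Rmin M a) (Rmin_r _ _)). apply Rabs_def2 in HM. lra. Qed.

Lemma ex_from h d : Cont h -> (forall x, 0 <= h x) -> (forall b, d <= b -> RInt h d b <= 1) ->
  exists l, lim_pinf (fun b => RInt h d b) l /\ (forall b, d <= b -> RInt h d b <= l) /\ l <= 1.
Proof. intros Hc Hp Hb.
  destruct (mono_lim (fun b => RInt h d b) d 1) as [l [Hl1 Hl2]]; auto.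
  intros x y Hx Hy. apply RInt_sub_int; auto; lra.
  exists l. split; auto. split; auto. apply (lim_pinf_le (fun b => RInt h d b) l d 1); auto. Qed.

Lemma ex_to h d : Cont h -> (forall x, 0 <= h x) -> (forall a, a <= d -> RInt h a d <= 1) ->
  exists l, lim_minf (fun a => RInt h a d) l /\ (forall a, a <= d -> RInt h a d <= l) /\ l <= 1.
Proof. intros Hc Hp Hb.
  destruct (mono_lim (fun b => RInt h (- b) d) (- d) 1) as [l [Hl1 Hl2]]; auto.
  intros x y Hx Hy. apply RInt_sub_int; auto; lra. intros x Hx. apply Hb. lra.
  exists l. split. apply lim_minf_pinf. auto. split. intros a Ha. replace a with (- - a) by ring. apply Hl2. lra.
  apply (lim_pinf_le (fun b => RInt h (- b) d) l (- d) 1); auto. intros x Hx. apply Hb; lra. Qed.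

Section Rho.
Variable rho : R -> R.
Hypothesis Hc : Cont rho.
Hypothesis Hpos : forall x, 0 <= rho x.
Hypothesis Hint : is_int_R rho 1.

Lemma int_le1 a b : a <= b -> RInt rho a b <= 1.
Proof. intros Hab. destruct (Rle_dec (RInt rho a b) 1) as [h|h]; auto. exfalso.
  destruct (Hint (RInt rho a b - 1)) as [M HM]. lra.
  destruct (HM (Rmin a (- M)) (Rmax b M) (Rmin_r _ _) (Rmax_r _ _)) as [v [Hv1 Hv2]].
  apply isR_iff in Hv1. apply RIv in Hv1.
  assert (RInt rho a b <= RInt rho (Rmin a (- M)) (Rmax b M)) by (apply RInt_sub_int; auto using Rmin_l, Rmax_l).
  apply Rabs_def2 in Hv2. lra. Qed.

Lemma RInt_exp_le f a b c (s : R) : Cont f -> (forall x, 0 <= f x) -> a <= b ->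
  (forall x, a <= x <= b -> exp (s * x + 0) <= c) -> RInt (fun t => f t * exp (s * t + 0)) a b <= c * RInt f a b.
Proof. intros Hf Hp Hab Hx.
  assert (E : c * RInt f a b = RInt (fun t => c * f t) a b).
  { symmetry. apply RIv. apply isR_scal. apply isR; auto. }
  rewrite E. apply RInt_mono; auto.
  apply Cont_mul; auto. apply Cont_expl.
  apply Cont_mul; auto. apply Cont_cst.
  intros x Hx'. rewrite Rmult_comm. apply Rmult_le_compat_r; auto. Qed.

Lemma Cont_rexp s : Cont (fun t => rho t * exp (s * t + 0)).
Proof. apply Cont_mul; auto. apply Cont_expl. Qed.

Lemma rexp_pos s x : 0 <= rho x * exp (s * x + 0).
Proof. apply Rmult_le_pos; auto. left; apply exp_pos. Qed.

Lemma ex_A0 : exists l, lim_minf (fun a => RInt rho a 0) l /\ (forall a, a <= 0 -> RInt rho a 0 <= l) /\ l <= 1.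
Proof. apply ex_to; auto. intros; apply int_le1; auto. Qed.
Lemma ex_D0 : exists l, lim_pinf (fun b => RInt rho 0 b) l /\ (forall b, 0 <= b -> RInt rho 0 b <= l) /\ l <= 1.
Proof. apply ex_from; auto. intros; apply int_le1; auto. Qed.
Lemma ex_B0 : exists l, lim_pinf (fun b => RInt (fun t => rho t * exp (-1 * t + 0)) 0 b) l /\
   (forall b, 0 <= b -> RInt (fun t => rho t * exp (-1 * t + 0)) 0 b <= l) /\ l <= 1.
Proof. apply ex_from; auto using Cont_rexp, rexp_pos. intros b Hb.
  eapply Rle_trans. apply RInt_exp_le with (c := 1); auto. intros x Hx.
  apply Rle_trans with (exp 0). apply exp_le_mono. nra. rewrite exp_0; lra. rewrite Rmult_1_l. apply int_le1; auto. Qed.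
Lemma ex_C0 : exists l, lim_minf (fun a => RInt (fun t => rho t * exp (1 * t + 0)) a 0) l /\
   (forall a, a <= 0 -> RInt (fun t => rho t * exp (1 * t + 0)) a 0 <= l) /\ l <= 1.
Proof. apply ex_to; auto using Cont_rexp, rexp_pos. intros b Hb.
  eapply Rle_trans. apply RInt_exp_le with (c := 1); auto. intros x Hx.
  apply Rle_trans with (exp 0). apply exp_le_mono. nra. rewrite exp_0; lra. rewrite Rmult_1_l. apply int_le1; auto. Qed.

End Rho.

Lemma Dstep_eq dl x y z : Dstep dl x y z = Rmin (dl + y - x) z - Rmin 0 (dl + y - x + z).
Proof. unfold Dstep, Rmin. repeat destruct Rle_dec; lra. Qed.

Lemma exp_mul u v : exp u * exp v = exp (u + v).
Proof. rewrite exp_plus; auto. Qed.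

Section Pos.
Variable g : R -> R.
Variables l r : R.
Hypothesis Hg : Cont g.
Hypothesis Hl : 0 < l.
Hypothesis Hz : forall t, t <= l \/ r <= t -> g t = 0.

Definition P a : R := RInt (fun t => g t * exp (-1 * t + 0)) 0 a.
Definition Rr a : R := RInt (fun t => g t * exp (-2 * t + 0)) a r.
Definition psi a : R := P a + g a * exp (-1 * a + 0).
Definition Psi s : R := P s * exp (-1 * s + 0) + 2 * Rr s.
Definition Wf s : R := P s * exp (1 * s + 0) + exp (2 * s + 0) * Rr s.
Definition Ef dl : R := P dl + exp (1 * dl + 0) * Rr dl.

Lemma exp_m1 s : exp (-1 * s + 0) = / exp (1 * s + 0).
Proof. rewrite <- exp_Ropp. f_equal. ring. Qed.
Lemma exp_2 s : exp (2 * s + 0) = exp (1 * s + 0) * exp (1 * s + 0).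
Proof. rewrite exp_mul. f_equal. ring. Qed.
Lemma exp_m2 s : exp (-2 * s + 0) = / exp (1 * s + 0) * / exp (1 * s + 0).
Proof. rewrite <- exp_Ropp, exp_mul. f_equal. ring. Qed.

Lemma Cont_gexp c : Cont (fun t => g t * exp (c * t + 0)).
Proof. apply Cont_mul; auto. apply Cont_expl. Qed.

Lemma P_der x : is_derive P x (g x * exp (-1 * x + 0)).
Proof. unfold P. apply (d_prim (fun t => g t * exp (-1 * t + 0)) 0 x). apply Cont_gexp. Qed.
Lemma Rr_der x : is_derive Rr x (- (g x * exp (-2 * x + 0))).
Proof. unfold Rr. apply (d_primL (fun t => g t * exp (-2 * t + 0)) r x). apply Cont_gexp. Qed.
Lemma Cont_P : Cont P.
Proof. apply (Cont_der _ _ P_der). Qed.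
Lemma Cont_Rr : Cont Rr.
Proof. apply (Cont_der _ _ Rr_der). Qed.

Lemma P_zero a : a <= l -> P a = 0.
Proof. intros Ha. apply RIv, isR_zero. intros x Hx.
  rewrite Hz. ring. left. assert (Rmax 0 a <= l) by (apply Rmax_lub; lra). lra. Qed.
Lemma Rr_zero a : r <= a -> Rr a = 0.
Proof. intros Ha. apply RIv, isR_zero. intros x Hx.
  rewrite Hz. ring. right. assert (r <= Rmin a r) by (apply Rmin_glb; lra). lra. Qed.
Lemma P_const a : r <= a -> P a = P r.
Proof. intros Ha. unfold P. rewrite <- (RInt_chasles _ 0 r a) by apply Cont_gexp.
  rewrite (RIv _ r a 0). ring. apply isR_zero. intros x Hx. rewrite Hz. ring. right.
  assert (r <= Rmin r a) by (apply Rmin_glb; lra). lra. Qed.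
Lemma Rr_const a : a <= l -> Rr a = Rr l.
Proof. intros Ha. unfold Rr. rewrite <- (RInt_chasles _ a l r) by apply Cont_gexp.
  rewrite (RIv _ a l 0). ring. apply isR_zero. intros x Hx. rewrite Hz. ring. left.
  assert (Rmax a l <= l) by (apply Rmax_lub; lra). lra. Qed.

Lemma Cont_psi : Cont psi.
Proof. apply Cont_plus. apply Cont_P. apply Cont_gexp. Qed.

Lemma layer_z dl x y : is_int_from (fun z => g (Dstep dl x y z) * exp (- z)) 0 (psi (dl + y - x)).
Proof.
  set (a := dl + y - x).
  destruct (Rle_dec a 0) as [Ha|Ha].
  - apply (from_of_lim _ _ (fun _ => 0)). intros b Hb. apply isR_zero. intros z Hzz.
    rewrite Rmin_left, Rmax_right in Hzz by lra. rewrite Dstep_eq. fold a. rewrite Hz. ring. left.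
    unfold Rmin. repeat destruct Rle_dec; lra.
    unfold psi. rewrite P_zero, Hz by lra. replace (0 + 0 * exp (-1 * a + 0)) with 0 by ring. apply lim_pinf_const.
  - apply (from_of_lim' _ _ a (fun b => P a + g a * (exp (-1 * a + 0) - exp (- b)))).
    intros b Hab.
    + apply (isR_chasles _ 0 a b).
      * apply (isR_ext (fun t => g t * exp (-1 * t + 0))). intros z Hzz.
        rewrite Rmin_left, Rmax_right in Hzz by lra. rewrite Dstep_eq. fold a.
        rewrite Rmin_right, Rmin_left by lra. rewrite Rminus_0_r. f_equal. f_equal. ring.
        apply isR, Cont_gexp.
      * apply (isR_ext (fun t => g a * exp (-1 * t + 0))). intros z Hzz.
        rewrite Rmin_left, Rmax_right in Hzz by lra. rewrite Dstep_eq. fold a.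
        rewrite Rmin_left, Rmin_left by lra. rewrite Rminus_0_r. f_equal. f_equal. ring.
        replace (g a * (exp (-1 * a + 0) - exp (- b))) with ((- g a * exp (-1 * b + 0)) - (- g a * exp (-1 * a + 0))).
        apply (ftc (fun t => - g a * exp (-1 * t + 0))). intros t. apply (d_val _ _ (- g a * (-1 * exp (-1 * t + 0)))).
        apply (is_derive_scal (fun t => exp (-1 * t + 0))). apply d_expl. ring.
        apply Cont_mul. apply Cont_cst. apply Cont_expl.
        replace (-1 * b + 0) with (- b) by ring. ring.
    + apply (lim_pinf_ext (fun b => (P a + g a * exp (-1 * a + 0)) + (- g a) * exp (- b))).
      exists a. intros b Hb. ring.
      replace (psi a) with ((P a + g a * exp (-1 * a + 0)) + (- g a) * 0) by (unfold psi; ring).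
      apply lim_pinf_plus. apply lim_pinf_const. apply lim_pinf_scal. apply lim_exp_neg.
Qed.

Lemma Psi_der s : is_derive Psi s (- (psi s * exp (-1 * s + 0))).
Proof. unfold Psi. eapply d_val. apply d_plus. apply d_mul. apply P_der. apply d_expl.
  apply (is_derive_scal Rr). apply Rr_der. unfold psi.
  replace (exp (-2 * s + 0)) with (exp (-1 * s + 0) * exp (-1 * s + 0)) by (rewrite exp_mul; f_equal; ring). ring. Qed.

Lemma Psi_large s : r <= s -> Psi s = P r * exp (-1 * s + 0).
Proof. intros H. unfold Psi. rewrite P_const, Rr_zero by auto. ring. Qed.

Lemma layer_y dl x : is_int_from (fun y => psi (dl + y - x) * exp (- y)) 0 (exp (1 * (dl - x) + 0) * Psi (dl - x)).
Proof.
  apply (from_of_lim _ _ (fun b => exp (1 * (dl - x) + 0) * (Psi (dl - x) - Psi (dl + b - x)))).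
  - intros b Hb.
    replace (exp (1 * (dl - x) + 0) * (Psi (dl - x) - Psi (dl + b - x))) with
      ((- exp (1 * (dl - x) + 0) * Psi (1 * b + (dl - x))) - (- exp (1 * (dl - x) + 0) * Psi (1 * 0 + (dl - x)))).
    2: { replace (1 * b + (dl - x)) with (dl + b - x) by ring. replace (1 * 0 + (dl - x)) with (dl - x) by ring. ring. }
    apply (ftc (fun t => - exp (1 * (dl - x) + 0) * Psi (1 * t + (dl - x)))).
    + intros t. eapply d_val. apply (is_derive_scal (fun t => Psi (1 * t + (dl - x)))).
      apply (d_comp Psi (fun t => 1 * t + (dl - x))). apply Psi_der. apply d_lin.
      replace (1 * t + (dl - x)) with (dl + t - x) by ring.
      replace (- (1 * (dl + t - x)) + 0) with ((-1 * (dl + t - x) + 0)) by ring.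
      transitivity (psi (dl + t - x) * (exp (1 * (dl - x) + 0) * exp (-1 * (dl + t - x) + 0))). ring.
      rewrite exp_mul. replace (1 * (dl - x) + 0 + (-1 * (dl + t - x) + 0)) with (- t) by ring. auto.
    + apply Cont_mul. replace (fun y => psi (dl + y - x)) with (fun t => psi (1 * t + (dl - x))).
      apply (Cont_compl psi 1 (dl - x)). apply Cont_psi. apply FunctionalExtensionality.functional_extensionality; intros; f_equal; ring.
      apply (Cont_comp exp (fun t => - t)). apply Cont_exp. apply Cont_opp, Cont_id.
  - replace (exp (1 * (dl - x) + 0) * Psi (dl - x)) with (exp (1 * (dl - x) + 0) * Psi (dl - x) + (- exp (1 * (dl - x) + 0)) * 0) by ring.
    apply (lim_pinf_ext (fun b => exp (1 * (dl - x) + 0) * Psi (dl - x) + (- exp (1 * (dl - x) + 0)) * Psi (dl + b - x))).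
    exists 0. intros; ring.
    apply lim_pinf_plus. apply lim_pinf_const. apply lim_pinf_scal.
    apply (lim_pinf_ext (fun b => (P r * exp (x - dl)) * exp (- b))).
    exists (r - dl + x). intros b Hb. rewrite Psi_large by lra. rewrite Rmult_assoc, exp_mul. f_equal. f_equal. ring.
    replace 0 with (P r * exp (x - dl) * 0) by ring. apply lim_pinf_scal. apply lim_exp_neg.
Qed.

Lemma Wf_der s : is_derive Wf s (exp (2 * s + 0) * Psi s).
Proof. unfold Wf. eapply d_val. apply d_plus. apply d_mul. apply P_der. apply d_expl.
  apply d_mul. apply d_expl. apply Rr_der. unfold Psi.
  rewrite (exp_m1 s), (exp_2 s), (exp_m2 s). pose proof (exp_pos (1 * s + 0)). field. lra. Qed.

Lemma Wf_small s : s <= 0 -> Wf s = exp (2 * s + 0) * Rr l.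
Proof. intros H. unfold Wf. rewrite P_zero, Rr_const by lra. ring. Qed.

Lemma Cont_Psi : Cont Psi.
Proof. apply (Cont_der _ _ Psi_der). Qed.

Lemma layer_x dl : is_int_from (fun x => exp (1 * (dl - x) + 0) * Psi (dl - x) * exp (- x)) 0 (Ef dl).
Proof.
  apply (from_of_lim _ _ (fun b => exp (-1 * dl + 0) * (Wf dl - Wf (dl - b)))).
  - intros b Hb.
    replace (exp (-1 * dl + 0) * (Wf dl - Wf (dl - b))) with
      ((- exp (-1 * dl + 0) * Wf (-1 * b + dl)) - (- exp (-1 * dl + 0) * Wf (-1 * 0 + dl))).
    2: { replace (-1 * b + dl) with (dl - b) by ring. replace (-1 * 0 + dl) with dl by ring. ring. }
    apply (ftc (fun t => - exp (-1 * dl + 0) * Wf (-1 * t + dl))).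
    + intros t. eapply d_val. apply (is_derive_scal (fun t => Wf (-1 * t + dl))).
      apply (d_comp Wf (fun t => -1 * t + dl)). apply Wf_der. apply d_lin.
      transitivity (Psi (-1 * t + dl) * (exp (-1 * dl + 0) * exp (2 * (-1 * t + dl) + 0))). ring.
      replace (-1 * t + dl) with (dl - t) by ring. rewrite exp_mul.
      transitivity (Psi (dl - t) * (exp (1 * (dl - t) + 0) * exp (- t))).
      f_equal. rewrite exp_mul. f_equal. ring. ring.
    + apply Cont_mul. apply Cont_mul.
      apply (Cont_ext (fun t => exp (-1 * t + dl))). intros; f_equal; ring. apply Cont_expl.
      apply (Cont_ext (fun t => Psi (-1 * t + dl))). intros; f_equal; ring. apply Cont_compl, Cont_Psi.
      apply (Cont_ext (fun t => exp (-1 * t + 0))). intros; f_equal; ring. apply Cont_expl.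
  - replace (Ef dl) with (exp (-1 * dl + 0) * Wf dl + (- exp (-1 * dl + 0)) * 0).
    2: { unfold Ef, Wf. replace (exp (-1 * dl + 0) * (P dl * exp (1 * dl + 0) + exp (2 * dl + 0) * Rr dl)) with
      (P dl * (exp (-1 * dl + 0) * exp (1 * dl + 0)) + (exp (-1 * dl + 0) * exp (2 * dl + 0)) * Rr dl) by ring.
      rewrite !exp_mul. replace (-1 * dl + 0 + (1 * dl + 0)) with 0 by ring. replace (-1 * dl + 0 + (2 * dl + 0)) with (1 * dl + 0) by ring.
      rewrite exp_0. ring. }
    apply (lim_pinf_ext (fun b => exp (-1 * dl + 0) * Wf dl + (- exp (-1 * dl + 0)) * Wf (dl - b))).
    exists 0. intros; ring.
    apply lim_pinf_plus. apply lim_pinf_const. apply lim_pinf_scal.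
    apply (lim_pinf_ext (fun b => (Rr l * exp (2 * dl)) * (exp (- b) * exp (- b)))).
    exists dl. intros b Hb. rewrite Wf_small by lra. rewrite !exp_mul. rewrite Rmult_assoc, exp_mul, Rmult_comm. f_equal. f_equal. ring.
    replace 0 with (Rr l * exp (2 * dl) * (0 * 0)) by ring. apply lim_pinf_scal.
    intros eps He. destruct (lim_exp_neg (Rmin eps 1)) as [M HM]. apply Rmin_pos; lra.
    exists M. intros b Hb. specialize (HM b Hb). rewrite Rminus_0_r in *. rewrite Rmult_0_r, Rminus_0_r, Rabs_mult.
    assert (Rmin eps 1 <= 1) by apply Rmin_r. assert (Rmin eps 1 <= eps) by apply Rmin_l.
    pose proof (Rabs_pos (exp (- b))). nra.
Qed.

End Pos.

Lemma isR_supp f a b l r : Cont f -> (forall x, x <= l \/ r <= x -> f x = 0) -> a <= l -> l <= r -> r <= b ->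
  is_RInt f a b (RInt f l r).
Proof. intros Hc Hz H1 H2 H3.
  replace (RInt f l r) with (0 + (RInt f l r + 0)) by ring.
  apply (isR_chasles _ a l b). apply isR_zero. intros x Hx. apply Hz. left.
  assert (Rmax a l <= l) by (apply Rmax_lub; lra). lra.
  apply (isR_chasles _ l r b). apply isR; auto. apply isR_zero. intros x Hx. apply Hz. right.
  assert (r <= Rmin r b) by (apply Rmin_glb; lra). lra. Qed.

Lemma isR_lim2 f L cst0 Ga Gb a0 b0 : is_int_R f L ->
  (forall a b, a <= a0 -> b0 <= b -> is_RInt f a b (cst0 + Ga a + Gb b)) ->
  lim_minf Ga 0 -> lim_pinf Gb 0 -> L = cst0.
Proof. intros HL HF Ha Hb. apply small_eq. intros eps He.
  destruct (HL (eps/3)) as [M HM]. lra. destruct (Ha (eps/3)) as [Ma HMa]. lra.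
  destruct (Hb (eps/3)) as [Mb HMb]. lra.
  set (a := Rmin (Rmin (- M) a0) Ma). set (b := Rmax (Rmax M b0) Mb).
  assert (a <= - M /\ a <= a0 /\ a <= Ma) as [A1 [A2 A3]].
  { unfold a. pose proof (Rmin_l (Rmin (- M) a0) Ma). pose proof (Rmin_r (Rmin (- M) a0) Ma).
    pose proof (Rmin_l (- M) a0). pose proof (Rmin_r (- M) a0). lra. }
  assert (M <= b /\ b0 <= b /\ Mb <= b) as [B1 [B2 B3]].
  { unfold b. pose proof (Rmax_l (Rmax M b0) Mb). pose proof (Rmax_r (Rmax M b0) Mb).
    pose proof (Rmax_l M b0). pose proof (Rmax_r M b0). lra. }
  destruct (HM a b A1 B1) as [w [Hw1 Hw2]]. apply isR_iff in Hw1.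
  assert (w = cst0 + Ga a + Gb b) by (eapply isR_unique; eauto).
  specialize (HMa a A3). specialize (HMb b B3). rewrite Rminus_0_r in *.
  apply Rabs_def2 in Hw2. apply Rabs_def2 in HMa. apply Rabs_def2 in HMb. apply Rabs_def1; lra. Qed.

Lemma lim_minf_0 F : lim_minf (fun _ => 0) 0.
Proof. intros eps He. exists 0. intros. rewrite Rminus_0_r, Rabs_R0. lra. Qed.
Lemma lim_pinf_0 : lim_pinf (fun _ => 0) 0.
Proof. intros eps He. exists 0. intros. rewrite Rminus_0_r, Rabs_R0. lra. Qed.

Lemma lim_minf_scal c F l : lim_minf F l -> lim_minf (fun x => c * F x) (c * l).
Proof. intros H. apply lim_minf_pinf. apply (lim_pinf_scal c (fun x => F (- x))). apply lim_pinf_minf.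
  replace (fun x => F (- - x)) with F; auto. apply FunctionalExtensionality.functional_extensionality; intros; f_equal; ring. Qed.

Section PosRho.
Variable rho : R -> R.
Hypothesis Hc : Cont rho.
Variables C0 D0 : R.
Hypothesis HC0 : lim_minf (fun a => RInt (fun t => rho t * exp (1 * t + 0)) a 0) C0.
Hypothesis HD0 : lim_pinf (fun b => RInt rho 0 b) D0.

Definition Cf d : R := C0 + RInt (fun t => rho t * exp (1 * t + 0)) 0 d.
Definition Df d : R := D0 - RInt rho 0 d.

Lemma Cf_der x : is_derive Cf x (rho x * exp (1 * x + 0)).
Proof. unfold Cf. eapply d_val. apply d_plus. apply d_cst. apply (d_prim (fun t => rho t * exp (1 * t + 0))).
  apply Cont_mul; auto. apply Cont_expl. ring. Qed.
Lemma Df_der x : is_derive Df x (- rho x).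
Proof. unfold Df. eapply d_val. apply d_minus. apply d_cst. apply (d_prim rho); auto. ring. Qed.
Lemma Cont_Cf : Cont Cf.
Proof. apply (Cont_der _ _ Cf_der). Qed.
Lemma Cont_Df : Cont Df.
Proof. apply (Cont_der _ _ Df_der). Qed.

Lemma Cf_lim : lim_minf Cf 0.
Proof. apply (lim_minf_ext (fun a => C0 + (-1) * RInt (fun t => rho t * exp (1 * t + 0)) a 0)).
  exists 0. intros a Ha. unfold Cf. rewrite <- (opp_RInt_swap (V:=R_CompleteNormedModule)). simpl. change opp with Ropp. ring.
  apply exR, Cont_mul; auto; apply Cont_expl.
  intros eps He. destruct (HC0 eps He) as [M HM]. exists M. intros a Ha. specialize (HM a Ha).
  replace (C0 + -1 * RInt (fun t => rho t * exp (1 * t + 0)) a 0 - 0) with (- (RInt (fun t => rho t * exp (1 * t + 0)) a 0 - C0)) by ring.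
  rewrite Rabs_Ropp; auto. Qed.
Lemma Df_lim : lim_pinf Df 0.
Proof. intros eps He. destruct (HD0 eps He) as [M HM]. exists M. intros b Hb. specialize (HM b Hb).
  unfold Df. replace (D0 - RInt rho 0 b - 0) with (- (RInt rho 0 b - D0)) by ring. rewrite Rabs_Ropp; auto. Qed.

Definition KR t : R := exp (-2 * t + 0) * Cf t + exp (-1 * t + 0) * Df t.
Lemma Cont_KR : Cont KR.
Proof. apply Cont_plus; apply Cont_mul; auto using Cont_expl, Cont_Cf, Cont_Df. Qed.

Variable g : R -> R.
Variables l r : R.
Hypothesis Hg : Cont g.
Hypothesis Hl : 0 < l.
Hypothesis Hlr : l < r.
Hypothesis Hz : forall t, t <= l \/ r <= t -> g t = 0.

Lemma pos_orth : (exists L, is_int_R (fun dl => rho dl * Ef g r dl) L /\ is_int_R (fun dl => rho dl * g dl) L) ->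
  RInt (fun t => g t * (KR t - rho t)) l r = 0.
Proof.
  intros [L [H1 H2]].
  assert (HgK : Cont (fun t => g t * KR t)) by (apply Cont_mul; auto using Cont_KR).
  assert (Hgr : Cont (fun t => rho t * g t)) by (apply Cont_mul; auto).
  assert (E1 : L = RInt (fun t => g t * KR t) l r).
  { apply (isR_lim2 _ L _ (fun a => - (Cf a * Rr g r l)) (fun b => - (Df b * P g r)) 0 r H1).
    - intros a b Ha Hb.
      set (H := fun t => - (Df t * P g t) + Cf t * Rr g r t).
      assert (I1 : is_RInt (fun t => rho t * Ef g r t - g t * KR t) a b (H b - H a)).
      { apply ftc.
        - intros t. unfold H. eapply d_val. apply d_plus. apply d_opp. apply d_mul. apply Df_der. apply (P_der g Hg).
          apply d_mul. apply Cf_der. apply (Rr_der g r Hg).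
          unfold Ef, KR. rewrite (exp_m1 t), (exp_m2 t). field. pose proof (exp_pos (1 * t + 0)); lra.
        - apply Cont_minus; auto. apply Cont_mul; auto. apply Cont_plus. apply (Cont_P g Hg). apply Cont_mul. apply Cont_expl. apply (Cont_Rr g r Hg). }
      assert (I2 : is_RInt (fun t => g t * KR t) a b (RInt (fun t => g t * KR t) l r)).
      { apply isR_supp; auto; try lra. intros x Hx. rewrite Hz; auto. ring. }
      assert (I3 := isR_plus _ _ _ _ _ _ I1 I2).
      eapply isR_ext in I3. 2: { intros x _. simpl. ring_simplify. reflexivity. }
      replace (RInt (fun t => g t * KR t) l r + - (Cf a * Rr g r l) + - (Df b * P g r)) with (H b - H a + RInt (fun t => g t * KR t) l r).
      exact I3.
      unfold H. rewrite (P_zero g l r Hl Hz a) by lra. rewrite (Rr_zero g l r Hz b) by lra.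
      rewrite (P_const g l r Hg Hz b) by lra. rewrite (Rr_const g l r Hg Hz a) by lra. ring.
    - apply (lim_minf_ext (fun a => (- Rr g r l) * Cf a)). exists 0. intros; ring.
      replace 0 with (- Rr g r l * 0) by ring. apply lim_minf_scal. apply Cf_lim.
    - apply (lim_pinf_ext (fun b => (- P g r) * Df b)). exists 0. intros; ring.
      replace 0 with (- P g r * 0) by ring. apply lim_pinf_scal. apply Df_lim. }
  assert (E2 : L = RInt (fun t => rho t * g t) l r).
  { apply (isR_lim2 _ L _ (fun _ => 0) (fun _ => 0) 0 r H2).
    - intros a b Ha Hb. rewrite !Rplus_0_r. apply isR_supp; auto; try lra. intros x Hx. rewrite Hz; auto. ring.
    - apply lim_minf_0; auto. - apply lim_pinf_0. }
  apply RIv. apply (isR_ext (fun t => g t * KR t - rho t * g t)). intros; ring.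
  replace 0 with (RInt (fun t => g t * KR t) l r - RInt (fun t => rho t * g t) l r) by lra.
  apply isR_minus; apply isR; auto.
Qed.

End PosRho.

Lemma lim_pinf_shift F l c : lim_pinf F l -> lim_pinf (fun b => F (b + c)) l.
Proof. intros H eps He. destruct (H eps He) as [M HM]. exists (M - c). intros b Hb. apply HM. lra. Qed.
Lemma lim_minf_shift F l c : lim_minf F l -> lim_pinf (fun b => F (c - b)) l.
Proof. intros H eps He. destruct (H eps He) as [M HM]. exists (c - M). intros b Hb. apply HM. lra. Qed.

Lemma gen_layer_y (psi Psi : R -> R) : Cont psi -> (forall s, is_derive Psi s (- (psi s * exp (-1 * s + 0)))) ->
  lim_pinf Psi 0 -> forall dl x,
  is_int_from (fun y => psi (dl + y - x) * exp (- y)) 0 (exp (1 * (dl - x) + 0) * Psi (dl - x)).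
Proof.
  intros Cont_psi Psi_der Hlim dl x.
  apply (from_of_lim _ _ (fun b => exp (1 * (dl - x) + 0) * (Psi (dl - x) - Psi (dl + b - x)))).
  - intros b Hb.
    replace (exp (1 * (dl - x) + 0) * (Psi (dl - x) - Psi (dl + b - x))) with
      ((- exp (1 * (dl - x) + 0) * Psi (1 * b + (dl - x))) - (- exp (1 * (dl - x) + 0) * Psi (1 * 0 + (dl - x)))).
    2: { replace (1 * b + (dl - x)) with (dl + b - x) by ring. replace (1 * 0 + (dl - x)) with (dl - x) by ring. ring. }
    apply (ftc (fun t => - exp (1 * (dl - x) + 0) * Psi (1 * t + (dl - x)))).
    + intros t. eapply d_val. apply (is_derive_scal (fun t => Psi (1 * t + (dl - x)))).
      apply (d_comp Psi (fun t => 1 * t + (dl - x))). apply Psi_der. apply d_lin.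
      replace (1 * t + (dl - x)) with (dl + t - x) by ring.
      replace (- (1 * (dl + t - x)) + 0) with ((-1 * (dl + t - x) + 0)) by ring.
      transitivity (psi (dl + t - x) * (exp (1 * (dl - x) + 0) * exp (-1 * (dl + t - x) + 0))). ring.
      rewrite exp_mul. replace (1 * (dl - x) + 0 + (-1 * (dl + t - x) + 0)) with (- t) by ring. auto.
    + apply Cont_mul. replace (fun y => psi (dl + y - x)) with (fun t => psi (1 * t + (dl - x))).
      apply (Cont_compl psi 1 (dl - x)). apply Cont_psi. apply FunctionalExtensionality.functional_extensionality; intros; f_equal; ring.
      apply (Cont_comp exp (fun t => - t)). apply Cont_exp. apply Cont_opp, Cont_id.
  - replace (exp (1 * (dl - x) + 0) * Psi (dl - x)) with (exp (1 * (dl - x) + 0) * Psi (dl - x) + (- exp (1 * (dl - x) + 0)) * 0) by ring.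
    apply (lim_pinf_ext (fun b => exp (1 * (dl - x) + 0) * Psi (dl - x) + (- exp (1 * (dl - x) + 0)) * Psi (b + (dl - x)))).
    exists 0. intros b _. replace (dl + b - x) with (b + (dl - x)) by ring. ring.
    apply lim_pinf_plus. apply lim_pinf_const. apply lim_pinf_scal. apply lim_pinf_shift; auto.
Qed.

Lemma gen_layer_x (Psi Wf : R -> R) : Cont Psi -> (forall s, is_derive Wf s (exp (2 * s + 0) * Psi s)) ->
  lim_minf Wf 0 -> forall dl,
  is_int_from (fun x => exp (1 * (dl - x) + 0) * Psi (dl - x) * exp (- x)) 0 (exp (-1 * dl + 0) * Wf dl).
Proof.
  intros Cont_Psi Wf_der Hlim dl.
  apply (from_of_lim _ _ (fun b => exp (-1 * dl + 0) * (Wf dl - Wf (dl - b)))).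
  - intros b Hb.
    replace (exp (-1 * dl + 0) * (Wf dl - Wf (dl - b))) with
      ((- exp (-1 * dl + 0) * Wf (-1 * b + dl)) - (- exp (-1 * dl + 0) * Wf (-1 * 0 + dl))).
    2: { replace (-1 * b + dl) with (dl - b) by ring. replace (-1 * 0 + dl) with dl by ring. ring. }
    apply (ftc (fun t => - exp (-1 * dl + 0) * Wf (-1 * t + dl))).
    + intros t. eapply d_val. apply (is_derive_scal (fun t => Wf (-1 * t + dl))).
      apply (d_comp Wf (fun t => -1 * t + dl)). apply Wf_der. apply d_lin.
      transitivity (Psi (-1 * t + dl) * (exp (-1 * dl + 0) * exp (2 * (-1 * t + dl) + 0))). ring.
      replace (-1 * t + dl) with (dl - t) by ring. rewrite exp_mul.
      transitivity (Psi (dl - t) * (exp (1 * (dl - t) + 0) * exp (- t))).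
      f_equal. rewrite exp_mul. f_equal. ring. ring.
    + apply Cont_mul. apply Cont_mul.
      apply (Cont_ext (fun t => exp (-1 * t + dl))). intros; f_equal; ring. apply Cont_expl.
      apply (Cont_ext (fun t => Psi (-1 * t + dl))). intros; f_equal; ring. apply Cont_compl, Cont_Psi.
      apply (Cont_ext (fun t => exp (-1 * t + 0))). intros; f_equal; ring. apply Cont_expl.
  - replace (exp (-1 * dl + 0) * Wf dl) with (exp (-1 * dl + 0) * Wf dl + (- exp (-1 * dl + 0)) * 0) by ring.
    apply (lim_pinf_ext (fun b => exp (-1 * dl + 0) * Wf dl + (- exp (-1 * dl + 0)) * Wf (dl - b))).
    exists 0. intros; ring.
    apply lim_pinf_plus. apply lim_pinf_const. apply lim_pinf_scal. apply lim_minf_shift; auto.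
Qed.

Section Neg.
Variable g : R -> R.
Variables l r : R.
Hypothesis Hg : Cont g.
Hypothesis Hr : r < 0.
Hypothesis Hz : forall t, t <= l \/ r <= t -> g t = 0.

Definition Pn a : R := RInt (fun t => g t * exp (1 * t + 0)) a 0.
Definition Vn a : R := RInt (fun t => g t * exp (2 * t + 0)) l a.
Definition psin a : R := Pn a + g a * exp (1 * a + 0).
Definition Psin s : R := Pn s * exp (-1 * s + 0).
Definition Wn s : R := Pn s * exp (1 * s + 0) + Vn s.
Definition En dl : R := Pn dl + exp (-1 * dl + 0) * Vn dl.

Lemma Pn_der x : is_derive Pn x (- (g x * exp (1 * x + 0))).
Proof. unfold Pn. apply (d_primL (fun t => g t * exp (1 * t + 0)) 0 x). apply (Cont_gexp g Hg). Qed.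
Lemma Vn_der x : is_derive Vn x (g x * exp (2 * x + 0)).
Proof. unfold Vn. apply (d_prim (fun t => g t * exp (2 * t + 0)) l x). apply (Cont_gexp g Hg). Qed.
Lemma Cont_Pn : Cont Pn.
Proof. apply (Cont_der _ _ Pn_der). Qed.
Lemma Cont_Vn : Cont Vn.
Proof. apply (Cont_der _ _ Vn_der). Qed.

Lemma Pn_zero a : r <= a -> Pn a = 0.
Proof. intros Ha. apply RIv, isR_zero. intros x Hx.
  rewrite Hz. ring. right. assert (r <= Rmin a 0) by (apply Rmin_glb; lra). lra. Qed.
Lemma Vn_zero a : a <= l -> Vn a = 0.
Proof. intros Ha. apply RIv, isR_zero. intros x Hx.
  rewrite Hz. ring. left. assert (Rmax l a <= l) by (apply Rmax_lub; lra). lra. Qed.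
Lemma Pn_const a : a <= l -> Pn a = Pn l.
Proof. intros Ha. unfold Pn. rewrite <- (RInt_chasles _ a l 0) by apply (Cont_gexp g Hg).
  rewrite (RIv _ a l 0). ring. apply isR_zero. intros x Hx. rewrite Hz. ring. left.
  assert (Rmax a l <= l) by (apply Rmax_lub; lra). lra. Qed.
Lemma Vn_const a : r <= a -> Vn a = Vn r.
Proof. intros Ha. unfold Vn. rewrite <- (RInt_chasles _ l r a) by apply (Cont_gexp g Hg).
  rewrite (RIv _ r a 0). ring. apply isR_zero. intros x Hx. rewrite Hz. ring. right.
  assert (r <= Rmin r a) by (apply Rmin_glb; lra). lra. Qed.

Lemma Cont_psin : Cont psin.
Proof. apply Cont_plus. apply Cont_Pn. apply (Cont_gexp g Hg). Qed.

Lemma layer_zn dl x y : is_int_from (fun z => g (Dstep dl x y z) * exp (- z)) 0 (psin (dl + y - x)).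
Proof.
  set (a := dl + y - x).
  destruct (Rle_dec 0 a) as [Ha|Ha].
  - apply (from_of_lim _ _ (fun _ => 0)). intros b Hb. apply isR_zero. intros z Hzz.
    rewrite Rmin_left, Rmax_right in Hzz by lra. rewrite Dstep_eq. fold a. rewrite Hz. ring. right.
    unfold Rmin. repeat destruct Rle_dec; lra.
    unfold psin. rewrite Pn_zero, Hz by lra. replace (0 + 0 * exp (1 * a + 0)) with 0 by ring. apply lim_pinf_const.
  - apply (from_of_lim' _ _ (- a) (fun b => Pn a + g a * (exp (1 * a + 0) - exp (- b)))).
    intros b Hab.
    + apply (isR_chasles _ 0 (- a) b).
      * apply (isR_ext (fun t => g (-1 * t + 0) * exp (-1 * t + 0))). intros z Hzz.
        rewrite Rmin_left, Rmax_right in Hzz by lra. rewrite Dstep_eq. fold a.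
        rewrite Rmin_left, Rmin_right by lra. f_equal. f_equal. ring. f_equal. ring.
        replace (Pn a) with (Pn (-1 * - a + 0) - Pn (-1 * 0 + 0)).
        apply (ftc (fun t => Pn (-1 * t + 0))). intros t. eapply d_val.
        apply (d_comp Pn (fun t => -1 * t + 0)). apply Pn_der. apply d_lin.
        replace (1 * (-1 * t + 0) + 0) with (-1 * t + 0) by ring. ring.
        apply Cont_mul. apply Cont_compl, Hg. apply Cont_expl.
        replace (-1 * - a + 0) with a by ring. replace (-1 * 0 + 0) with 0 by ring.
        rewrite (Pn_zero 0) by lra. ring.
      * apply (isR_ext (fun t => g a * exp (-1 * t + 0))). intros z Hzz.
        rewrite Rmin_left, Rmax_right in Hzz by lra. rewrite Dstep_eq. fold a.
        rewrite Rmin_left, Rmin_left by lra. rewrite Rminus_0_r. f_equal. f_equal. ring.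
        replace (g a * (exp (1 * a + 0) - exp (- b))) with ((- g a * exp (-1 * b + 0)) - (- g a * exp (-1 * - a + 0))).
        apply (ftc (fun t => - g a * exp (-1 * t + 0))). intros t. apply (d_val _ _ (- g a * (-1 * exp (-1 * t + 0)))).
        apply (is_derive_scal (fun t => exp (-1 * t + 0))). apply d_expl. ring.
        apply Cont_mul. apply Cont_cst. apply Cont_expl.
        replace (-1 * b + 0) with (- b) by ring. replace (-1 * - a + 0) with (1 * a + 0) by ring. ring.
    + apply (lim_pinf_ext (fun b => (Pn a + g a * exp (1 * a + 0)) + (- g a) * exp (- b))).
      exists a. intros b Hb. ring.
      replace (psin a) with ((Pn a + g a * exp (1 * a + 0)) + (- g a) * 0) by (unfold psin; ring).
      apply lim_pinf_plus. apply lim_pinf_const. apply lim_pinf_scal. apply lim_exp_neg.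
Qed.

Lemma Psin_der s : is_derive Psin s (- (psin s * exp (-1 * s + 0))).
Proof. unfold Psin. eapply d_val. apply d_mul. apply Pn_der. apply d_expl. unfold psin.
  rewrite (exp_m1 s). pose proof (exp_pos (1 * s + 0)). field. lra. Qed.

Lemma Psin_lim : lim_pinf Psin 0.
Proof. apply (lim_pinf_ext (fun _ => 0)). exists r. intros b Hb. unfold Psin. rewrite Pn_zero by lra. ring.
  apply lim_pinf_const. Qed.

Lemma Wn_der s : is_derive Wn s (exp (2 * s + 0) * Psin s).
Proof. unfold Wn. eapply d_val. apply d_plus. apply d_mul. apply Pn_der. apply d_expl. apply Vn_der.
  unfold Psin. rewrite (exp_m1 s), (exp_2 s). pose proof (exp_pos (1 * s + 0)). field. lra. Qed.

Lemma Wn_lim : lim_minf Wn 0.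
Proof. apply (lim_minf_ext (fun s => Pn l * exp (1 * s + 0))). exists l. intros b Hb. unfold Wn.
  rewrite (Vn_zero b), (Pn_const b) by lra. ring.
  apply lim_minf_pinf. replace 0 with (Pn l * 0) by ring. apply lim_pinf_scal.
  apply (lim_pinf_ext (fun x => exp (- x))). exists 0. intros; f_equal; ring. apply lim_exp_neg. Qed.

Lemma Cont_Psin : Cont Psin.
Proof. apply (Cont_der _ _ Psin_der). Qed.

Lemma layer_yn dl x : is_int_from (fun y => psin (dl + y - x) * exp (- y)) 0 (exp (1 * (dl - x) + 0) * Psin (dl - x)).
Proof. apply gen_layer_y. apply Cont_psin. apply Psin_der. apply Psin_lim. Qed.

Lemma layer_xn dl : is_int_from (fun x => exp (1 * (dl - x) + 0) * Psin (dl - x) * exp (- x)) 0 (En dl).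
Proof. replace (En dl) with (exp (-1 * dl + 0) * Wn dl).
  apply gen_layer_x. apply Cont_Psin. apply Wn_der. apply Wn_lim.
  unfold En, Wn. rewrite (exp_m1 dl). pose proof (exp_pos (1 * dl + 0)). field. lra. Qed.

End Neg.

Section NegRho.
Variable rho : R -> R.
Hypothesis Hc : Cont rho.
Variables A0 B0 : R.
Hypothesis HA0 : lim_minf (fun a => RInt rho a 0) A0.
Hypothesis HB0 : lim_pinf (fun b => RInt (fun t => rho t * exp (-1 * t + 0)) 0 b) B0.

Definition Af d : R := A0 + RInt rho 0 d.
Definition Bf d : R := B0 - RInt (fun t => rho t * exp (-1 * t + 0)) 0 d.

Lemma Af_der x : is_derive Af x (rho x).
Proof. unfold Af. eapply d_val. apply d_plus. apply d_cst. apply (d_prim rho); auto. ring. Qed.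
Lemma Bf_der x : is_derive Bf x (- (rho x * exp (-1 * x + 0))).
Proof. unfold Bf. eapply d_val. apply d_minus. apply d_cst. apply (d_prim (fun t => rho t * exp (-1 * t + 0))).
  apply Cont_mul; auto. apply Cont_expl. ring. Qed.
Lemma Cont_Af : Cont Af.
Proof. apply (Cont_der _ _ Af_der). Qed.
Lemma Cont_Bf : Cont Bf.
Proof. apply (Cont_der _ _ Bf_der). Qed.

Lemma Af_lim : lim_minf Af 0.
Proof. apply (lim_minf_ext (fun a => A0 + (-1) * RInt rho a 0)).
  exists 0. intros a Ha. unfold Af. rewrite <- (opp_RInt_swap (V:=R_CompleteNormedModule)). simpl. change opp with Ropp. ring.
  apply exR; auto.
  intros eps He. destruct (HA0 eps He) as [M HM]. exists M. intros a Ha. specialize (HM a Ha).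
  replace (A0 + -1 * RInt rho a 0 - 0) with (- (RInt rho a 0 - A0)) by ring.
  rewrite Rabs_Ropp; auto. Qed.
Lemma Bf_lim : lim_pinf Bf 0.
Proof. intros eps He. destruct (HB0 eps He) as [M HM]. exists M. intros b Hb. specialize (HM b Hb).
  unfold Bf. replace (B0 - RInt (fun t => rho t * exp (-1 * t + 0)) 0 b - 0) with (- (RInt (fun t => rho t * exp (-1 * t + 0)) 0 b - B0)) by ring.
  rewrite Rabs_Ropp; auto. Qed.

Definition KL t : R := exp (1 * t + 0) * Af t + exp (2 * t + 0) * Bf t.
Lemma Cont_KL : Cont KL.
Proof. apply Cont_plus; apply Cont_mul; auto using Cont_expl, Cont_Af, Cont_Bf. Qed.

Variable g : R -> R.
Variables l r : R.
Hypothesis Hg : Cont g.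
Hypothesis Hr : r < 0.
Hypothesis Hlr : l < r.
Hypothesis Hz : forall t, t <= l \/ r <= t -> g t = 0.

Lemma neg_orth : (exists L, is_int_R (fun dl => rho dl * En g l dl) L /\ is_int_R (fun dl => rho dl * g dl) L) ->
  RInt (fun t => g t * (KL t - rho t)) l r = 0.
Proof.
  intros [L [H1 H2]].
  assert (HgK : Cont (fun t => g t * KL t)) by (apply Cont_mul; auto using Cont_KL).
  assert (Hgr : Cont (fun t => rho t * g t)) by (apply Cont_mul; auto).
  assert (E1 : L = RInt (fun t => g t * KL t) l r).
  { apply (isR_lim2 _ L _ (fun a => - (Af a * Pn g l)) (fun b => - (Bf b * Vn g l r)) l r H1).
    - intros a b Ha Hb.
      set (H := fun t => Af t * Pn g t - Bf t * Vn g l t).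
      assert (I1 : is_RInt (fun t => rho t * En g l t - g t * KL t) a b (H b - H a)).
      { apply ftc.
        - intros t. unfold H. eapply d_val. apply d_minus. apply d_mul. apply Af_der. apply (Pn_der g Hg).
          apply d_mul. apply Bf_der. apply (Vn_der g l Hg).
          unfold En, KL. rewrite (exp_m1 t), (exp_2 t). field. pose proof (exp_pos (1 * t + 0)); lra.
        - apply Cont_minus; auto. apply Cont_mul; auto. apply Cont_plus. apply (Cont_Pn g Hg). apply Cont_mul. apply Cont_expl. apply (Cont_Vn g l Hg). }
      assert (I2 : is_RInt (fun t => g t * KL t) a b (RInt (fun t => g t * KL t) l r)).
      { apply isR_supp; auto; try lra. intros x Hx. rewrite Hz; auto. ring. }
      assert (I3 := isR_plus _ _ _ _ _ _ I1 I2).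
      eapply isR_ext in I3. 2: { intros x _. simpl. ring_simplify. reflexivity. }
      replace (RInt (fun t => g t * KL t) l r + - (Af a * Pn g l) + - (Bf b * Vn g l r)) with (H b - H a + RInt (fun t => g t * KL t) l r).
      exact I3.
      unfold H. rewrite (Pn_zero g l r Hr Hz b) by lra. rewrite (Vn_zero g l r Hz a) by lra.
      rewrite (Pn_const g l r Hg Hz a) by lra. rewrite (Vn_const g l r Hg Hz b) by lra. ring.
    - apply (lim_minf_ext (fun a => (- Pn g l) * Af a)). exists 0. intros; ring.
      replace 0 with (- Pn g l * 0) by ring. apply lim_minf_scal. apply Af_lim.
    - apply (lim_pinf_ext (fun b => (- Vn g l r) * Bf b)). exists 0. intros; ring.
      replace 0 with (- Vn g l r * 0) by ring. apply lim_pinf_scal. apply Bf_lim. }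
  assert (E2 : L = RInt (fun t => rho t * g t) l r).
  { apply (isR_lim2 _ L _ (fun _ => 0) (fun _ => 0) l r H2).
    - intros a b Ha Hb. rewrite !Rplus_0_r. apply isR_supp; auto; try lra. intros x Hx. rewrite Hz; auto. ring.
    - apply lim_minf_0; auto. - apply lim_pinf_0. }
  apply RIv. apply (isR_ext (fun t => g t * KL t - rho t * g t)). intros; ring.
  replace 0 with (RInt (fun t => g t * KL t) l r - RInt (fun t => rho t * g t) l r) by lra.
  apply isR_minus; apply isR; auto.
Qed.

End NegRho.

Lemma Cont_continuity f : Cont f -> continuity f.
Proof. intros H x. apply continuity_pt_filterlim, H. Qed.

Lemma supp_K g l r : (forall t, t <= l \/ r <= t -> g t = 0) -> exists K, forall t, K < Rabs t -> g t = 0.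
Proof. intros Hz. exists (Rmax (Rabs l) (Rabs r)). intros t Ht. apply Hz.
  pose proof (Rmax_l (Rabs l) (Rabs r)). pose proof (Rmax_r (Rabs l) (Rabs r)).
  pose proof (Rle_abs l). pose proof (Rle_abs r). pose proof (Rle_abs (- l)). rewrite Rabs_Ropp in *.
  destruct (Rle_dec 0 t). rewrite (Rabs_pos_eq t) in Ht by lra. right; lra.
  rewrite (Rabs_left t) in Ht by lra. left; lra. Qed.

Lemma is_int_R_ext f1 f2 L : (forall x, f1 x = f2 x) -> is_int_R f1 L -> is_int_R f2 L.
Proof. intros H. replace f2 with f1; auto. apply FunctionalExtensionality.functional_extensionality; auto. Qed.
Lemma is_int_from_ext f1 f2 a L : (forall x, f1 x = f2 x) -> is_int_from f1 a L -> is_int_from f2 a L.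
Proof. intros H. replace f2 with f1; auto. apply FunctionalExtensionality.functional_extensionality; auto. Qed.
Lemma is_int_to_ext f1 f2 a L : (forall x, f1 x = f2 x) -> is_int_to f1 a L -> is_int_to f2 a L.
Proof. intros H. replace f2 with f1; auto. apply FunctionalExtensionality.functional_extensionality; auto. Qed.

Lemma stat_pos rho g l r : stationary_density rho -> Cont g -> 0 < l -> (forall t, t <= l \/ r <= t -> g t = 0) ->
  exists L, is_int_R (fun dl => rho dl * Ef g r dl) L /\ is_int_R (fun dl => rho dl * g dl) L.
Proof. intros Hs Hg Hl Hz.
  destruct (Hs g (Cont_continuity g Hg) (supp_K g l r Hz)) as [Eg [HE [L [H1 H2]]]].
  exists L. split; auto. eapply is_int_R_ext; [|exact H1]. intros dl. cbv beta. f_equal.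
  destruct (HE dl) as [h2 [h1 [K1 [K2 K3]]]].
  assert (E2 : forall x y, h2 x y = psi g (dl + y - x)).
  { intros x y. eapply from_unique. apply K1. apply (layer_z g l r Hg Hl Hz). }
  assert (E1 : forall x, h1 x = exp (1 * (dl - x) + 0) * Psi g r (dl - x)).
  { intros x. eapply from_unique. apply K2. eapply is_int_from_ext. 2: apply (layer_y g l r Hg Hz dl x).
    intros y. simpl. rewrite E2. auto. }
  eapply from_unique. apply K3. eapply is_int_from_ext. 2: apply (layer_x g l r Hg Hl Hz dl).
  intros x. simpl. rewrite E1. auto. Qed.

Lemma stat_neg rho g l r : stationary_density rho -> Cont g -> r < 0 -> (forall t, t <= l \/ r <= t -> g t = 0) ->
  exists L, is_int_R (fun dl => rho dl * En g l dl) L /\ is_int_R (fun dl => rho dl * g dl) L.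
Proof. intros Hs Hg Hr Hz.
  destruct (Hs g (Cont_continuity g Hg) (supp_K g l r Hz)) as [Eg [HE [L [H1 H2]]]].
  exists L. split; auto. eapply is_int_R_ext; [|exact H1]. intros dl. cbv beta. f_equal.
  destruct (HE dl) as [h2 [h1 [K1 [K2 K3]]]].
  assert (E2 : forall x y, h2 x y = psin g (dl + y - x)).
  { intros x y. eapply from_unique. apply K1. apply (layer_zn g l r Hg Hr Hz). }
  assert (E1 : forall x, h1 x = exp (1 * (dl - x) + 0) * Psin g (dl - x)).
  { intros x. eapply from_unique. apply K2. eapply is_int_from_ext. 2: apply (layer_yn g l r Hg Hr Hz dl x).
    intros y. simpl. rewrite E2. auto. }
  eapply from_unique. apply K3. eapply is_int_from_ext. 2: apply (layer_xn g l r Hg Hz dl).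
  intros x. simpl. rewrite E1. auto. Qed.

Lemma localize F lo hi d0 : Cont F -> lo < d0 < hi ->
  (forall g l r, Cont g -> lo < l -> l < r -> r < hi -> (forall t, t <= l \/ r <= t -> g t = 0) ->
     RInt (fun t => g t * F t) l r = 0) -> F d0 = 0.
Proof.
  intros HF Hd H.
  assert (main : forall F, Cont F -> (forall g l r, Cont g -> lo < l -> l < r -> r < hi -> (forall t, t <= l \/ r <= t -> g t = 0) ->
     RInt (fun t => g t * F t) l r = 0) -> ~ 0 < F d0).
  { clear F HF H. intros F HF H Hpos.
    assert (Hc := HF d0). apply continuity_pt_filterlim in Hc.
    destruct (Hc (F d0 / 2)) as [alp [Halp Hal]]. lra.
    set (h := Rmin (alp / 2) (Rmin ((d0 - lo) / 2) ((hi - d0) / 2))).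
    assert (hpos : 0 < h). { unfold h. repeat apply Rmin_pos; lra. }
    assert (h1 : h <= alp / 2) by apply Rmin_l.
    assert (h2 : h <= (d0 - lo) / 2) by (eapply Rle_trans; [apply Rmin_r|apply Rmin_l]).
    assert (h3 : h <= (hi - d0) / 2) by (eapply Rle_trans; [apply Rmin_r|apply Rmin_r]).
    set (g := fun t => Rmax 0 (h - Rabs (t - d0))).
    assert (Hg : Cont g).
    { apply Cont_max0. apply Cont_minus. apply Cont_cst. intros x. apply continuous_Rabs_comp.
      apply (Cont_minus (fun t => t) (fun _ => d0)). apply Cont_id. apply Cont_cst. }
    assert (Hz : forall t, t <= d0 - h \/ d0 + h <= t -> g t = 0).
    { intros t Ht. unfold g. apply Rmax_left. destruct Ht.
      rewrite Rabs_left1 by lra. lra. rewrite Rabs_pos_eq by lra. lra. }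
    specialize (H g (d0 - h) (d0 + h) Hg ltac:(lra) ltac:(lra) ltac:(lra) Hz).
    assert (0 < RInt (fun t => g t * F t) (d0 - h) (d0 + h)).
    { apply RInt_pos_lt. apply Cont_mul; auto. lra. intros x Hx. apply Rmult_lt_0_compat.
      unfold g. apply Rlt_le_trans with (h - Rabs (x - d0)). assert (Rabs (x - d0) < h) by (apply Rabs_def1; lra). lra. apply Rmax_r.
      destruct (Req_dec x d0) as [->|Hne]. lra.
      assert (Hb : D_x no_cond d0 x /\ dist R_met x d0 < alp).
      { split. split. constructor. auto. simpl. unfold R_dist. apply Rabs_def1; lra. }
      specialize (Hal x Hb). simpl in Hal. unfold R_dist in Hal. apply Rabs_def2 in Hal. lra. }
    lra. }
  destruct (Rtotal_order (F d0) 0) as [Hlt|[Heq|Hgt]]; auto.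
  - exfalso. apply (main (fun t => - F t)). apply Cont_opp; auto.
    intros g l r Hg H1 H2 H3 Hz. specialize (H g l r Hg H1 H2 H3 Hz).
    replace (RInt (fun t => g t * - F t) l r) with (- RInt (fun t => g t * F t) l r). lra.
    symmetry. apply RIv. replace (fun t => g t * - F t) with (fun t => -1 * (g t * F t)).
    replace (- RInt (fun t => g t * F t) l r) with (-1 * RInt (fun t => g t * F t) l r) by ring.
    apply isR_scal. apply isR. apply Cont_mul; auto.
    apply FunctionalExtensionality.functional_extensionality; intros; ring. lra.
  - exfalso. apply (main F HF H Hgt).
Qed.

Lemma der_cont (G : R -> R) t l : is_derive G t l -> continuity_pt G t.
Proof. intros H. apply continuity_pt_filterlim.
  apply (ex_derive_continuous (K:=R_AbsRing) (V:=R_NormedModule)). eexists; eauto. Qed.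

Lemma mvt_neg G G' u v : (forall t, t < 0 -> is_derive G t (G' t)) -> u <= v -> v < 0 ->
  exists c, u <= c <= v /\ G v - G u = G' c * (v - u).
Proof. intros H Huv Hv.
  destruct (MVT_gen G u v G') as [c [Hc1 Hc2]].
  - intros x Hx. rewrite Rmin_left, Rmax_right in Hx by lra. apply H. lra.
  - intros x Hx. rewrite Rmin_left, Rmax_right in Hx by lra. apply (der_cont G x (G' x)). apply H. lra.
  - rewrite Rmin_left, Rmax_right in Hc1 by lra. exists c. split; auto. Qed.

Lemma mono_neg G G' : (forall t, t < 0 -> is_derive G t (G' t)) -> (forall t, t < 0 -> G' t <= 0) ->
  forall u v, u <= v -> v < 0 -> G v <= G u.
Proof. intros H H' u v Huv Hv. destruct (mvt_neg G G' u v H Huv Hv) as [c [Hc E]].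
  assert (G' c <= 0) by (apply H'; lra). nra. Qed.

Lemma const_neg G : (forall t, t < 0 -> is_derive G t 0) -> forall u, u < 0 -> G u = G (-1).
Proof. intros H u Hu.
  destruct (Rle_dec u (-1)).
  - destruct (mvt_neg G (fun _ => 0) u (-1) H) as [c [Hc E]]; try lra.
  - destruct (mvt_neg G (fun _ => 0) (-1) u H) as [c [Hc E]]; try lra. Qed.

Lemma deriv_zero_loc F d l a b : a < d < b -> (forall t, a < t < b -> F t = 0) -> is_derive F d l -> l = 0.
Proof. intros Hd Hz HF.
  assert (H2 : is_derive (fun _ : R => 0) d l).
  { apply (is_derive_ext_loc F). apply (locally_interval _ d a b); simpl; try lra.
    intros y H1 H2. apply Hz; lra. auto. }
  eapply d_unique. apply H2. apply d_cst. Qed.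

Lemma cont_left_ge h c : Cont h -> (forall d, -1 < d < 0 -> c <= h d) -> c <= h 0.
Proof. intros Hh H. destruct (Rle_dec c (h 0)) as [e|e]; auto. exfalso.
  assert (Hc := Hh 0). apply continuity_pt_filterlim in Hc.
  destruct (Hc (c - h 0)) as [alp [Halp Hal]]. lra.
  set (d := - Rmin alp 1 / 2).
  assert (Hd : -1 < d < 0) by (unfold d; pose proof (Rmin_l alp 1); pose proof (Rmin_r alp 1);
    assert (0 < Rmin alp 1) by (apply Rmin_pos; lra); lra).
  assert (Hb : D_x no_cond 0 d /\ dist R_met d 0 < alp).
  { split. split. constructor. lra. simpl. unfold R_dist. rewrite Rminus_0_r, Rabs_left by lra.
    unfold d. pose proof (Rmin_l alp 1). lra. }
  specialize (Hal d Hb). simpl in Hal. unfold R_dist in Hal. apply Rabs_def2 in Hal.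
  specialize (H d Hd). lra. Qed.

Lemma cont_left_eq h1 h2 : Cont h1 -> Cont h2 -> (forall d, -1 < d < 0 -> h1 d = h2 d) -> h1 0 = h2 0.
Proof. intros H1 H2 H.
  assert (0 <= h1 0 - h2 0). { apply (cont_left_ge (fun t => h1 t - h2 t)). apply Cont_minus; auto. intros d Hd. rewrite H; auto. lra. }
  assert (0 <= h2 0 - h1 0). { apply (cont_left_ge (fun t => h2 t - h1 t)). apply Cont_minus; auto. intros d Hd. rewrite H; auto. lra. }
  lra. Qed.

Definition Side (f A B : R -> R) : Prop :=
  forall d, d < 0 -> is_derive A d (f d) /\ is_derive B d (- (f d * exp (-1 * d + 0))) /\
    f d = exp (1 * d + 0) * A d + exp (2 * d + 0) * B d /\
    0 <= A d /\ A d <= 1 /\ 0 <= B d /\ B d <= 1 + exp (-1 * d + 0) /\ 0 <= f d.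

Lemma side_f_le f A B : Side f A B -> forall d, d < 0 -> f d <= 3 * exp (1 * d + 0).
Proof. intros H d Hd. destruct (H d Hd) as [_ [_ [E [_ [A2 [_ [B2 _]]]]]]]. rewrite E.
  pose proof (exp_pos (1 * d + 0)). rewrite exp_2. rewrite (exp_m1 d) in B2.
  set (e := exp (1 * d + 0)) in *. assert (e <= 1). { unfold e. apply Rle_trans with (exp 0). apply exp_le_mono. lra. rewrite exp_0; lra. }
  assert (HB : e * e * B d <= e * e * (1 + / e)). { apply Rmult_le_compat_l; auto. nra. }
  replace (e * e * (1 + / e)) with (e * e + e) in HB by (field; lra). nra. Qed.

Lemma side_A_le f A B : Side f A B -> lim_minf A 0 -> forall d, d < 0 -> A d <= 3 * exp (1 * d + 0).
Proof. intros H Hl d Hd.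
  assert (Hm : forall u, u <= d -> A d - 3 * exp (1 * d + 0) <= A u - 3 * exp (1 * u + 0)).
  { intros u Hu. apply (mono_neg (fun t => A t - 3 * exp (1 * t + 0)) (fun t => f t - 3 * (1 * exp (1 * t + 0)))); auto.
    intros t Ht. apply d_minus. apply (H t Ht). apply (is_derive_scal (fun t => exp (1 * t + 0))). apply d_expl.
    intros t Ht. pose proof (side_f_le f A B H t Ht). lra. }
  assert (Hl2 : lim_minf (fun u => A u - 3 * exp (1 * u + 0)) 0).
  { assert (K : lim_pinf (fun u => A (- u) + -3 * exp (- u)) (0 + -3 * 0)).
    { apply lim_pinf_plus. apply lim_pinf_minf. replace (fun x => A (- - x)) with A; auto.
      apply FunctionalExtensionality.functional_extensionality; intros; f_equal; ring.
      apply lim_pinf_scal. apply lim_exp_neg. }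
    rewrite Rmult_0_r, Rplus_0_r in K. apply lim_minf_pinf. eapply lim_pinf_ext; [|exact K].
    exists 0. intros b _. cbv beta. replace (1 * - b + 0) with (- b) by ring. ring. }
  assert (A d - 3 * exp (1 * d + 0) <= 0).
  { apply Rnot_lt_le. intros Hc. destruct (Hl2 (A d - 3 * exp (1 * d + 0))) as [M HM]. lra.
    specialize (HM (Rmin M d) (Rmin_l _ _)). specialize (Hm (Rmin M d) (Rmin_r _ _)).
    rewrite Rminus_0_r in HM. apply Rabs_def2 in HM. lra. }
  lra. Qed.

Lemma side_B_le f A B : Side f A B -> forall d, d <= -1 -> B d <= B (-1) + 3 * (-1 - d).
Proof. intros H d Hd.
  assert (D1 : forall t, t < 0 -> is_derive (fun t => - (B t + 3 * t)) t (- (- (f t * exp (-1 * t + 0)) + 3))).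
  { intros t Ht. apply d_opp. apply d_plus. apply (H t Ht). apply (d_ext (fun t => 3 * t + 0)). intros; ring. apply d_lin. }
  assert (D2 : forall t, t < 0 -> - (- (f t * exp (-1 * t + 0)) + 3) <= 0).
  { intros t Ht. pose proof (side_f_le f A B H t Ht). rewrite (exp_m1 t). pose proof (exp_pos (1 * t + 0)).
    assert (f t * / exp (1 * t + 0) <= 3). { apply (Rmult_le_reg_r (exp (1 * t + 0))); auto. rewrite Rmult_assoc, Rinv_l; lra. }
    lra. }
  assert (K := mono_neg _ _ D1 D2 d (-1) Hd ltac:(lra)). simpl in K. lra. Qed.

Lemma Bnd_lim c : 0 <= c -> lim_minf (fun d => exp (1 * d + 0) * (c + 3 * (-1 - d))) 0.
Proof. intros Hc eps He.
  assert (K : forall d, d <= -1 -> Rabs (exp (1 * d + 0) * (c + 3 * (-1 - d)) - 0) <= (c + 6) * exp (d / 2)).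
  { intros d Hd. rewrite Rminus_0_r.
    assert (E1 : exp (1 * d + 0) = exp (d / 2) * exp (d / 2)) by (rewrite exp_mul; f_equal; field).
    assert (E2 : - d <= 2 * exp (- (d / 2))) by (pose proof (exp_ineq1_le (- (d / 2))); lra).
    assert (E3 : exp (d / 2) * exp (- (d / 2)) = 1) by (rewrite exp_mul; replace (d / 2 + - (d / 2)) with 0 by field; apply exp_0).
    assert (E4 : exp (d / 2) <= 1) by (apply Rle_trans with (exp 0); [apply exp_le_mono; lra|rewrite exp_0; lra]).
    pose proof (exp_pos (d / 2)). pose proof (exp_pos (- (d / 2))).
    rewrite Rabs_pos_eq. 2: { apply Rmult_le_pos. left; apply exp_pos. lra. }
    rewrite E1. assert (exp (d / 2) * (c + 3 * (-1 - d)) <= c + 6) by nra. nra. }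
  set (M := Rmin (-1) (2 * ln (eps / 2 / (c + 6)))).
  exists M. intros d Hd. eapply Rle_lt_trans. apply K. unfold M in Hd. pose proof (Rmin_l (-1) (2 * ln (eps / 2 / (c + 6)))). lra.
  assert (exp (d / 2) <= eps / 2 / (c + 6)).
  { rewrite <- (exp_ln (eps / 2 / (c + 6))). apply exp_le_mono. unfold M in Hd. pose proof (Rmin_r (-1) (2 * ln (eps / 2 / (c + 6)))). lra.
    apply Rdiv_lt_0_compat; lra. }
  apply Rle_lt_trans with ((c + 6) * (eps / 2 / (c + 6))). apply Rmult_le_compat_l; lra.
  replace ((c + 6) * (eps / 2 / (c + 6))) with (eps / 2) by (field; lra). lra. Qed.

Lemma side_lim f1 A1 B1 f2 A2 B2 : Side f1 A1 B1 -> Side f2 A2 B2 -> lim_minf A1 0 -> lim_minf A2 0 ->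
  lim_minf (fun d => A1 d * B2 d - A2 d * B1 d) 0.
Proof. intros S1 S2 L1 L2.
  set (c := Rmax (B1 (-1)) (B2 (-1))).
  assert (Hc0 : 0 <= c). { unfold c. destruct (S1 (-1) ltac:(lra)) as [_ [_ [_ [_ [_ [h _]]]]]]. eapply Rle_trans; [exact h|apply Rmax_l]. }
  assert (K : forall d, d <= -1 -> Rabs (A1 d * B2 d - A2 d * B1 d - 0) <= 6 * (exp (1 * d + 0) * (c + 3 * (-1 - d)))).
  { intros d Hd. rewrite Rminus_0_r. destruct (S1 d) as [_ [_ [_ [P1 [_ [Q1 _]]]]]]. lra. destruct (S2 d) as [_ [_ [_ [P2 [_ [Q2 _]]]]]]. lra.
    pose proof (side_A_le f1 A1 B1 S1 L1 d ltac:(lra)). pose proof (side_A_le f2 A2 B2 S2 L2 d ltac:(lra)).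
    pose proof (side_B_le f1 A1 B1 S1 d Hd). pose proof (side_B_le f2 A2 B2 S2 d Hd).
    assert (B1 (-1) <= c) by apply Rmax_l. assert (B2 (-1) <= c) by apply Rmax_r.
    pose proof (exp_pos (1 * d + 0)).
    assert (X1 : A1 d * B2 d <= 3 * exp (1 * d + 0) * (c + 3 * (-1 - d))).
    { apply Rmult_le_compat; auto; lra. }
    assert (X2 : A2 d * B1 d <= 3 * exp (1 * d + 0) * (c + 3 * (-1 - d))).
    { apply Rmult_le_compat; auto; lra. }
    assert (0 <= A1 d * B2 d) by (apply Rmult_le_pos; auto). assert (0 <= A2 d * B1 d) by (apply Rmult_le_pos; auto).
    apply Rabs_le. split; lra. }
  intros eps He. destruct (Bnd_lim c Hc0 (eps / 6)) as [M HM]. lra. exists (Rmin M (-1)). intros d Hd.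
  eapply Rle_lt_trans. apply K. pose proof (Rmin_r M (-1)). lra.
  specialize (HM d ltac:(pose proof (Rmin_l M (-1)); lra)). rewrite Rminus_0_r in HM.
  rewrite Rabs_pos_eq in HM. lra.
  apply Rmult_le_pos. left; apply exp_pos. pose proof (Rmin_r M (-1)). lra. Qed.

Lemma wron f1 A1 B1 f2 A2 B2 : Side f1 A1 B1 -> Side f2 A2 B2 -> lim_minf A1 0 -> lim_minf A2 0 ->
  (forall d, d < 0 -> 0 < A1 d) -> exists lam, forall d, d < 0 -> f2 d = lam * f1 d.
Proof. intros S1 S2 L1 L2 Hpos.
  set (Lam := fun d => A1 d * B2 d - A2 d * B1 d).
  assert (DL : forall d, d < 0 -> is_derive Lam d 0).
  { intros d Hd. destruct (S1 d Hd) as [a1 [b1 [e1 _]]]. destruct (S2 d Hd) as [a2 [b2 [e2 _]]].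
    unfold Lam. eapply d_val. apply d_minus; apply d_mul; eauto.
    rewrite e1, e2, (exp_m1 d), (exp_2 d). pose proof (exp_pos (1 * d + 0)). field. lra. }
  assert (Lam0 : forall d, d < 0 -> Lam d = 0).
  { assert (E : Lam (-1) = 0).
    { eapply lim_minf_unique. 2: apply (side_lim f1 A1 B1 f2 A2 B2 S1 S2 L1 L2).
      apply (lim_minf_ext (fun _ => Lam (-1))). exists (-1). intros b Hb. change (Lam (-1) = Lam b). symmetry. apply const_neg; auto; lra.
      intros eps He. exists 0. intros. rewrite Rminus_eq_0, Rabs_R0; lra. }
    intros d Hd. rewrite (const_neg Lam DL d Hd). auto. }
  set (q := fun d => A2 d / A1 d).
  assert (DQ : forall d, d < 0 -> is_derive q d 0).
  { intros d Hd. destruct (S1 d Hd) as [a1 [b1 [e1 _]]]. destruct (S2 d Hd) as [a2 [b2 [e2 _]]].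
    unfold q. eapply d_val. apply is_derive_div; eauto. specialize (Hpos d Hd); lra.
    assert (Lam d = 0) by auto. unfold Lam in H.
    rewrite e1, e2. specialize (Hpos d Hd). pose proof (exp_pos (1 * d + 0)).
    replace ((exp (1 * d + 0) * A2 d + exp (2 * d + 0) * B2 d) * A1 d - A2 d * (exp (1 * d + 0) * A1 d + exp (2 * d + 0) * B1 d))
      with (exp (2 * d + 0) * (A1 d * B2 d - A2 d * B1 d)) by ring.
    rewrite H. field. lra. }
  exists (q (-1)). intros d Hd. rewrite <- (const_neg q DQ d Hd). unfold q.
  destruct (S1 d Hd) as [a1 [b1 [e1 _]]]. destruct (S2 d Hd) as [a2 [b2 [e2 _]]].
  assert (Lam d = 0) by auto. unfold Lam in H. specialize (Hpos d Hd).
  rewrite e1, e2. apply (Rmult_eq_reg_r (A1 d)). 2: lra. field_simplify. 2: lra.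
  assert (HH : A1 d * B2 d = A2 d * B1 d) by lra.
  transitivity (exp (1 * d + 0) * A2 d * A1 d + exp (2 * d + 0) * (A1 d * B2 d)). ring. rewrite HH. ring. Qed.

Lemma side_dich f A B : Side f A B -> (forall d, d < 0 -> 0 < A d) \/ (forall d, d < 0 -> f d = 0).
Proof. intros S.
  destruct (Classical_Prop.classic (forall d, d < 0 -> 0 < A d)) as [H|H]; [left; auto|right].
  apply Classical_Pred_Type.not_all_ex_not in H. destruct H as [d0 Hd0].
  apply Classical_Prop.imply_to_and in Hd0. destruct Hd0 as [Hd0 HA].
  assert (A0 : A d0 = 0) by (destruct (S d0 Hd0) as [_ [_ [_ [h _]]]]; lra).
  assert (Amon : forall u v, u <= v -> v < 0 -> A u <= A v).
  { intros u v Huv Hv. assert (- A v <= - A u). apply (mono_neg (fun t => - A t) (fun t => - f t)); auto.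
    intros t Ht. apply d_opp. apply (S t Ht). intros t Ht. destruct (S t Ht) as [_ [_ [_ [_ [_ [_ [_ h]]]]]]]; lra. lra. }
  assert (Az : forall t, t < d0 -> A t = 0).
  { intros t Ht. destruct (S t ltac:(lra)) as [_ [_ [_ [h _]]]]. pose proof (Amon t d0 ltac:(lra) Hd0). lra. }
  assert (fz : forall t, t < d0 -> f t = 0).
  { intros t Ht. apply (deriv_zero_loc A t (f t) (t - 1) d0); try lra. intros; apply Az; lra. apply (S t); lra. }
  assert (Bz0 : forall t, t < d0 -> B t = 0).
  { intros t Ht. destruct (S t ltac:(lra)) as [_ [_ [e _]]]. rewrite fz, Az in e by lra.
    pose proof (exp_pos (2 * t + 0)). nra. }
  assert (Bmon : forall u v, u <= v -> v < 0 -> B v <= B u).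
  { intros u v Huv Hv. apply (mono_neg B (fun t => - (f t * exp (-1 * t + 0)))); auto.
    intros t Ht. apply (S t Ht). intros t Ht. destruct (S t Ht) as [_ [_ [_ [_ [_ [_ [_ h]]]]]]].
    pose proof (exp_pos (-1 * t + 0)). nra. }
  assert (Bz : forall t, t < 0 -> B t = 0).
  { intros t Ht. destruct (S t Ht) as [_ [_ [_ [_ [_ [h _]]]]]]. set (u := Rmin (d0 - 1) t).
    pose proof (Bmon u t (Rmin_r _ _) Ht). rewrite (Bz0 u) in H. lra. unfold u. pose proof (Rmin_l (d0 - 1) t). lra. }
  intros t Ht. assert (- (f t * exp (-1 * t + 0)) = 0).
  { apply (deriv_zero_loc B t _ (t - 1) (t / 2)); try lra. intros; apply Bz; lra. apply (S t Ht). }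
  pose proof (exp_pos (-1 * t + 0)). nra. Qed.

Lemma even_from f1 A1 B1 f2 A2 B2 : Side f1 A1 B1 -> Side f2 A2 B2 -> lim_minf A1 0 -> lim_minf A2 0 ->
  (forall d, d < 0 -> 0 < A1 d) -> Cont f1 -> Cont f2 -> f1 0 = f2 0 -> forall d, d < 0 -> f2 d = f1 d.
Proof. intros S1 S2 L1 L2 Hp C1 C2 E0.
  destruct (wron f1 A1 B1 f2 A2 B2 S1 S2 L1 L2 Hp) as [lam Hlam].
  assert (Hmon : forall d, -1 <= d -> d < 0 -> A1 (-1) <= A1 d).
  { intros d H1 H2. assert (- A1 d <= - A1 (-1)); [|lra].
    apply (mono_neg (fun t => - A1 t) (fun t => - f1 t)); auto.
    intros t Ht. apply d_opp. apply (S1 t Ht). intros t Ht. destruct (S1 t Ht) as [_ [_ [_ [_ [_ [_ [_ h]]]]]]]; lra. }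
  assert (Pos0 : exp (-1) * A1 (-1) <= f1 0).
  { apply cont_left_ge; auto. intros d Hd. destruct (S1 d ltac:(lra)) as [_ [_ [e [_ [_ [hB _]]]]]].
    rewrite e. pose proof (Hmon d ltac:(lra) ltac:(lra)). pose proof (Hp (-1) ltac:(lra)).
    assert (exp (-1) <= exp (1 * d + 0)) by (apply exp_le_mono; lra).
    pose proof (exp_pos (-1)). pose proof (exp_pos (2 * d + 0)).
    assert (exp (-1) * A1 (-1) <= exp (1 * d + 0) * A1 d) by (apply Rmult_le_compat; lra).
    assert (0 <= exp (2 * d + 0) * B2 d \/ True) by auto.
    assert (0 <= exp (2 * d + 0) * B1 d) by (apply Rmult_le_pos; lra). lra. }
  assert (f1 0 > 0). { pose proof (Hp (-1) ltac:(lra)). pose proof (exp_pos (-1)). nra. }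
  assert (E1 : f2 0 = lam * f1 0).
  { apply (cont_left_eq f2 (fun t => lam * f1 t)); auto. apply Cont_mul; auto. apply Cont_cst.
    intros d Hd. apply Hlam. lra. }
  assert (lam = 1). { rewrite <- E0 in E1. apply (Rmult_eq_reg_r (f1 0)); lra. }
  intros d Hd. rewrite Hlam; auto. subst; ring. Qed.

Lemma lim_minf_addc F l c : lim_minf F l -> lim_minf (fun x => F x + c) (l + c).
Proof. intros H eps He. destruct (H eps He) as [M HM]. exists M. intros a Ha.
  replace (F a + c - (l + c)) with (F a - l) by ring. auto. Qed.
Lemma lim_pinf_addc F l c : lim_pinf F l -> lim_pinf (fun x => F x + c) (l + c).
Proof. intros H eps He. destruct (H eps He) as [M HM]. exists M. intros a Ha.
  replace (F a + c - (l + c)) with (F a - l) by ring. auto. Qed.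

Lemma to_from_prim h d L0 : Cont h -> lim_minf (fun a => RInt h a 0) L0 -> is_int_to h d (L0 + RInt h 0 d).
Proof. intros Hh HL. apply (to_of_lim _ _ (fun a => RInt h a d)). intros; apply isR; auto.
  apply (lim_minf_ext (fun a => RInt h a 0 + RInt h 0 d)). exists 0. intros; apply RInt_chasles; auto.
  apply lim_minf_addc; auto. Qed.

Lemma from_from_prim h d L0 : Cont h -> lim_pinf (fun b => RInt h 0 b) L0 -> is_int_from h d (L0 - RInt h 0 d).
Proof. intros Hh HL. apply (from_of_lim _ _ (fun b => RInt h d b)). intros; apply isR; auto.
  apply (lim_pinf_ext (fun b => RInt h 0 b + - RInt h 0 d)). exists 0. intros b _.
  rewrite <- (RInt_chasles h 0 d b Hh). ring.
  apply lim_pinf_addc; auto. Qed.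

Theorem main_thm (rho : R -> R)
  (Hcont : continuity rho)
  (Hdens : prob_density rho)
  (Hstat : stationary_density rho) :
  (forall d, d < 0 ->
     exists I1 I2,
       is_int_to rho d I1 /\
       is_int_from (fun delta => rho delta * exp (- delta)) d I2 /\
       rho d = exp d * I1 + exp (2 * d) * I2) /\
  (forall d, 0 <= d ->
     exists I1 I2,
       is_int_to (fun delta => rho delta * exp delta) d I1 /\
       is_int_from rho d I2 /\
       rho d = exp (- (2 * d)) * I1 + exp (- d) * I2) /\
  (forall d, rho d = rho (- d)).
Proof.
  destruct Hdens as [Hpos Hint].
  assert (Hc := Cont_of rho Hcont).
  destruct (ex_A0 rho Hc Hpos Hint) as [A0 [HA0 [HA0b HA01]]].
  destruct (ex_B0 rho Hc Hpos Hint) as [B0 [HB0 [HB0b HB01]]].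
  destruct (ex_C0 rho Hc Hpos Hint) as [C0 [HC0 [HC0b HC01]]].
  destruct (ex_D0 rho Hc Hpos Hint) as [D0 [HD0 [HD0b HD01]]].
  assert (Hexp1 : Cont (fun t => rho t * exp (1 * t + 0))) by (apply Cont_mul; auto; apply Cont_expl).
  assert (Hexpm1 : Cont (fun t => rho t * exp (-1 * t + 0))) by (apply Cont_mul; auto; apply Cont_expl).
  assert (EqN : forall d, d < 0 -> rho d = KL rho A0 B0 d).
  { intros d Hd. assert (KL rho A0 B0 d - rho d = 0); [|lra].
    apply (localize (fun t => KL rho A0 B0 t - rho t) (d - 1) 0 d).
    apply Cont_minus; auto. apply Cont_KL; auto. lra.
    intros g l r Hg H1 H2 H3 Hz. apply (neg_orth rho Hc A0 B0 HA0 HB0 g l r Hg H3 H2 Hz).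
    apply (stat_neg rho g l r); auto. }
  assert (EqP' : forall d, 0 < d -> rho d = KR rho C0 D0 d).
  { intros d Hd. assert (KR rho C0 D0 d - rho d = 0); [|lra].
    apply (localize (fun t => KR rho C0 D0 t - rho t) 0 (d + 1) d).
    apply Cont_minus; auto. apply Cont_KR; auto. lra.
    intros g l r Hg H1 H2 H3 Hz. apply (pos_orth rho Hc C0 D0 HC0 HD0 g l r Hg H1 H2 Hz).
    apply (stat_pos rho g l r); auto. }
  assert (EqP : forall d, 0 <= d -> rho d = KR rho C0 D0 d).
  { intros d Hd. destruct Hd as [Hd|Hd]. apply EqP'; auto. subst d.
    replace 0 with (- 0) by ring.
    apply (cont_left_eq (fun t => rho (- t)) (fun t => KR rho C0 D0 (- t))).
    apply (Cont_ext (fun t => rho (-1 * t + 0))). intros; f_equal; ring. apply Cont_compl; auto.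
    apply (Cont_ext (fun t => KR rho C0 D0 (-1 * t + 0))). intros; f_equal; ring. apply Cont_compl, Cont_KR; auto.
    intros t Ht. apply EqP'. lra. }
  split; [|split].
  - intros d Hd. exists (Af rho A0 d), (Bf rho B0 d). split; [|split].
    + apply to_from_prim; auto.
    + eapply is_int_from_ext. 2: apply from_from_prim; [apply Hexpm1|apply HB0].
      intros x; simpl. f_equal. f_equal. ring.
    + rewrite EqN by auto. unfold KL. f_equal. f_equal. f_equal; ring. f_equal. f_equal. ring.
  - intros d Hd. exists (Cf rho C0 d), (Df rho D0 d). split; [|split].
    + eapply is_int_to_ext. 2: apply to_from_prim; [apply Hexp1|apply HC0].
      intros x; simpl. f_equal. f_equal. ring.
    + apply from_from_prim; auto.
    + rewrite EqP by auto. unfold KR. f_equal. f_equal. f_equal; ring. f_equal. f_equal. ring.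
  -
    set (sig := fun t => rho (- t)).
    set (A2 := fun t => Df rho D0 (- t)).
    set (B2 := fun t => Cf rho C0 (- t)).
    assert (S1 : Side rho (Af rho A0) (Bf rho B0)).
    { intros d Hd. split; [|split; [|split; [|split; [|split; [|split; [|split]]]]]].
      - apply Af_der; auto.
      - apply Bf_der; auto.
      - rewrite EqN; auto.
      - unfold Af. rewrite <- (opp_RInt_swap (V:=R_CompleteNormedModule)) by (apply exR; auto).
        change opp with Ropp. simpl. pose proof (HA0b d ltac:(lra)). lra.
      - unfold Af. rewrite <- (opp_RInt_swap (V:=R_CompleteNormedModule)) by (apply exR; auto).
        change opp with Ropp. simpl. pose proof (RInt_ge0 rho d 0 Hc ltac:(lra) Hpos). lra.
      - unfold Bf. rewrite <- (opp_RInt_swap (V:=R_CompleteNormedModule)) by (apply exR; auto).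
        change opp with Ropp. simpl.
        pose proof (RInt_ge0 _ d 0 Hexpm1 ltac:(lra) (rexp_pos rho Hpos (-1))).
        assert (0 <= B0). { apply (lim_pinf_ge _ B0 0 0 HB0). intros; apply RInt_ge0; auto. apply rexp_pos; auto. }
        lra.
      - unfold Bf. rewrite <- (opp_RInt_swap (V:=R_CompleteNormedModule)) by (apply exR; auto).
        change opp with Ropp. simpl.
        assert (RInt (fun t => rho t * exp (-1 * t + 0)) d 0 <= exp (-1 * d + 0) * RInt rho d 0).
        { apply RInt_exp_le; auto. lra. intros x Hx. apply exp_le_mono. lra. }
        pose proof (int_le1 rho Hc Hpos Hint d 0 ltac:(lra)). pose proof (exp_pos (-1 * d + 0)).
        assert (exp (-1 * d + 0) * RInt rho d 0 <= exp (-1 * d + 0)).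
        { rewrite <- (Rmult_1_r (exp (-1 * d + 0))) at 2. apply Rmult_le_compat_l; lra. }
        lra.
      - auto. }
    assert (S2 : Side sig A2 B2).
    { intros d Hd. split; [|split; [|split; [|split; [|split; [|split; [|split]]]]]].
      - unfold A2, sig. apply (d_ext (fun t => Df rho D0 (-1 * t + 0))). intros; f_equal; ring.
        eapply d_val. apply (d_comp (Df rho D0) (fun t => -1 * t + 0)). apply Df_der; auto. apply d_lin.
        replace (-1 * d + 0) with (- d) by ring. ring.
      - unfold B2, sig. apply (d_ext (fun t => Cf rho C0 (-1 * t + 0))). intros; f_equal; ring.
        eapply d_val. apply (d_comp (Cf rho C0) (fun t => -1 * t + 0)). apply Cf_der; auto. apply d_lin.
        replace (1 * (-1 * d + 0) + 0) with (-1 * d + 0) by ring. replace (rho (-1 * d + 0)) with (rho (- d)) by (f_equal; ring). ring.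
      - unfold sig, A2, B2. rewrite EqP by lra. unfold KR. replace (-2 * - d + 0) with (2 * d + 0) by ring.
        replace (-1 * - d + 0) with (1 * d + 0) by ring. ring.
      - unfold A2, Df. pose proof (HD0b (- d) ltac:(lra)). lra.
      - unfold A2, Df. pose proof (RInt_ge0 rho 0 (- d) Hc ltac:(lra) Hpos). lra.
      - unfold B2, Cf. pose proof (RInt_ge0 _ 0 (- d) Hexp1 ltac:(lra) (rexp_pos rho Hpos 1)).
        assert (0 <= C0). { apply (lim_minf_ge _ C0 0 0 HC0). intros; apply RInt_ge0; auto. apply rexp_pos; auto. }
        lra.
      - unfold B2, Cf.
        assert (RInt (fun t => rho t * exp (1 * t + 0)) 0 (- d) <= exp (-1 * d + 0) * RInt rho 0 (- d)).
        { apply RInt_exp_le; auto. lra. intros x Hx. apply exp_le_mono. lra. }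
        pose proof (int_le1 rho Hc Hpos Hint 0 (- d) ltac:(lra)). pose proof (exp_pos (-1 * d + 0)).
        assert (exp (-1 * d + 0) * RInt rho 0 (- d) <= exp (-1 * d + 0)).
        { rewrite <- (Rmult_1_r (exp (-1 * d + 0))) at 2. apply Rmult_le_compat_l; lra. }
        lra.
      - unfold sig; auto. }
    assert (LA1 : lim_minf (Af rho A0) 0) by (apply Af_lim; auto).
    assert (LA2 : lim_minf A2 0).
    { apply lim_minf_pinf. unfold A2. eapply lim_pinf_ext; [|apply (Df_lim rho D0 HD0)].
      exists 0. intros; f_equal; ring. }
    assert (Csig : Cont sig). { apply (Cont_ext (fun t => rho (-1 * t + 0))). intros; unfold sig; f_equal; ring. apply Cont_compl; auto. }
    assert (E0 : rho 0 = sig 0) by (unfold sig; f_equal; ring).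
    assert (Neg : forall d, d < 0 -> sig d = rho d).
    { destruct (side_dich _ _ _ S1) as [P1|Z1].
      - apply (even_from rho (Af rho A0) (Bf rho B0) sig A2 B2); auto.
      - destruct (side_dich _ _ _ S2) as [P2|Z2].
        + intros d Hd. symmetry. apply (even_from sig A2 B2 rho (Af rho A0) (Bf rho B0)); auto.
        + exfalso.
          assert (Z : forall t, rho t = 0).
          { assert (Zn : forall t, t <> 0 -> rho t = 0).
            { intros t Ht. destruct (Rlt_dec t 0). apply Z1; auto. replace t with (- - t) by ring.
              apply (Z2 (- t)). lra. }
            intros t. destruct (Req_dec t 0) as [->|Ht]; auto.
            apply (cont_left_eq rho (fun _ => 0)); auto. apply Cont_cst. intros; apply Zn; lra. }
          destruct (Hint (1/2)) as [M HM]. lra.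
          destruct (HM (- Rabs M) (Rabs M)) as [w [Hw1 Hw2]]. pose proof (Rle_abs M); lra.
          apply Rle_abs.
          apply isR_iff in Hw1. assert (w = 0). { eapply isR_unique. exact Hw1. apply isR_zero. intros; auto. }
          subst w. rewrite Rminus_0_l, Rabs_Ropp, Rabs_R1 in Hw2. lra. }
    intros d. destruct (Rtotal_order d 0) as [Hd|[Hd|Hd]].
    + symmetry. apply (Neg d Hd).
    + subst. f_equal. ring.
    + replace d with (- - d) at 1 by ring. apply (Neg (- d)). lra.
Qed.


Theorem mainTheorem6 (rho : R -> R)
  (Hcont : continuity rho)
  (Hdens : prob_density rho)
  (Hstat : stationary_density rho) :
  (forall d, d < 0 ->
     exists I1 I2,
       is_int_to rho d I1 /\
       is_int_from (fun delta => rho delta * exp (- delta)) d I2 /\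
       rho d = exp d * I1 + exp (2 * d) * I2) /\
  (forall d, 0 <= d ->
     exists I1 I2,
       is_int_to (fun delta => rho delta * exp delta) d I1 /\
       is_int_from rho d I2 /\
       rho d = exp (- (2 * d)) * I1 + exp (- d) * I2) /\
  (forall d, rho d = rho (- d)).
Proof. exact (main_thm rho Hcont Hdens Hstat). Qed.
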